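(* Let $\mathcal{K}$ be an $N$-dimensional asymptotic class (for some positive integer $N$) of finite trees, viewed as $\mathcal{L}_t$-structures, containing arbitrarily large finite members. Let $\mathbb{T}_{\mathbf{C}_\mathcal{K}}$ be the set of complete theories $\mathrm{Th}(\mathcal{M})$ where $\mathcal{M}$ ranges over infinite ultraproducts of members of $\mathcal{K}$. Then (1) $\mathbb{T}_{\mathbf{C}_\mathcal{K}}$ is finite, and (2) every $T\in\mathbb{T}_{\mathbf{C}_\mathcal{K}}$ is $\aleph_0$-categorical.
   Context: Trees: the language $\mathcal{L}_t$ has a binary relation $\le$, a constant $\varepsilon$, a binary function $\sqcap$ and a unary function $\mathtt{pred}$. A tree is an $\mathcal{L}_t$-structure in which $\le$ is a partial order with every downset $\{a:a\le b\}$ well-ordered, $\varepsilon$ is the least element, $a\sqcap a'$ is the greatest common lower bound of $a,a'$, $\mathtt{pred}(a)$ is the greatest element strictly below $a$ for $a\ne\varepsilon$, and $\mathtt{pred}(\varepsilon)=\varepsilon$. Asymptotic classes: for a positive integer $N$, a class $\mathcal{K}$ of finite $\mathcal{L}$-structures is an $N$-dimensional asymptotic class if for every $\mathcal{L}$-formula $\varphi(x,\bar y)$ with $|\bar y|=m$ there is a finite set of triples $(d_i,\mu_i,\theta_i(\bar y))$, $i<k$, with $d_i\in\{0,\frac1N,\dots,1\}$, $\mu_i\in[0,\infty)$ (with $\mu_i>0$ unless $d_i=0$), and $\theta_i$ $\mathcal{L}$-formulas, such that: (i) the $\theta_i$ partition $A^m$ in every $A\in\mathcal{K}$; (ii) for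 each $i$ and $\epsilon>0$ there is $M$ such that for all $A\in\mathcal{K}$ with $|A|\ge M$ and $\bar b\in A^m$ with $A\models\theta_i(\bar b)$, $\big||\varphi(A,\bar b)|-\mu_i|A|^{d_i}\big|\le\epsilon|A|^{d_i}$. *)

(* Defs.v *)
From Stdlib Require Import Reals List Arith Lia.
From Stdlib Require Import IndefiniteDescription.
Open Scope R_scope.

Record Lstr : Type := MkLstr {
  car : Type;
  Ble : car -> car -> Prop;
  Beps : car;
  Bmeet : car -> car -> car;
  Bpred : car -> car
}.

(* Terms and formulas, variables as de Bruijn indices. *)
Inductive term : Type :=
  | TVar : nat -> term
  | TEps : term
  | TMeet : term -> term -> term
  | TPred : term -> term.

Inductive formula : Type :=
  | FEq : term -> term -> formula
  | FLe : term -> term -> formula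
  | FFalse : formula
  | FNot : formula -> formula
  | FAnd : formula -> formula -> formula
  | FOr : formula -> formula -> formula
  | FImp : formula -> formula -> formula
  | FEx : formula -> formula
  | FAll : formula -> formula.

Fixpoint teval (M : Lstr) (e : nat -> car M) (t : term) : car M :=
  match t with
  | TVar n => e n
  | TEps => Beps M
  | TMeet t1 t2 => Bmeet M (teval M e t1) (teval M e t2)
  | TPred t1 => Bpred M (teval M e t1)
  end.

Definition scons {A : Type} (x : A) (e : nat -> A) : nat -> A :=
  fun n => match n with 0 => x | S k => e k end.

Fixpoint sat (M : Lstr) (e : nat -> car M) (phi : formula) : Prop :=
  match phi with
  | FEq t1 t2 => teval M e t1 = teval M e t2
  | FLe t1 t2 => Ble M (teval M e t1) (teval M e t2)
  | FFalse => False
  | FNot p => ~ sat M e p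
  | FAnd p q => sat M e p /\ sat M e q
  | FOr p q => sat M e p \/ sat M e q
  | FImp p q => sat M e p -> sat M e q
  | FEx p => exists x : car M, sat M (scons x e) p
  | FAll p => forall x : car M, sat M (scons x e) p
  end.

Fixpoint tbound (n : nat) (t : term) : Prop :=
  match t with
  | TVar k => (k < n)%nat
  | TEps => True
  | TMeet t1 t2 => tbound n t1 /\ tbound n t2
  | TPred t1 => tbound n t1
  end.

Fixpoint fbound (n : nat) (phi : formula) : Prop :=
  match phi with
  | FEq t1 t2 | FLe t1 t2 => tbound n t1 /\ tbound n t2
  | FFalse => True
  | FNot p => fbound n p
  | FAnd p q | FOr p q | FImp p q => fbound n p /\ fbound n q
  | FEx p | FAll p => fbound (S n) p
  end.

Definition sentence (phi : formula) : Prop := fbound 0 phi.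

(* Assignment of a tuple b = (b_0, ..., b_{m-1}) to variables 0..m-1
   (remaining variables get eps; irrelevant for formulas bounded by m). *)
Definition env_of (M : Lstr) (b : list (car M)) : nat -> car M :=
  fun n => nth n b (Beps M).

Definition Blt (M : Lstr) (a b : car M) : Prop := Ble M a b /\ a <> b.

Definition is_tree (M : Lstr) : Prop :=
  (forall a, Ble M a a) /\
  (forall a b, Ble M a b -> Ble M b a -> a = b) /\
  (forall a b c, Ble M a b -> Ble M b c -> Ble M a c) /\
  (* every downset {a : a <= b} is well-ordered: linear, and every
     nonempty subset has a least element *)
  (forall b a a', Ble M a b -> Ble M a' b -> Ble M a a' \/ Ble M a' a) /\
  (forall b (S : car M -> Prop),
      (forall a, S a -> Ble M a b) -> (exists a, S a) ->
      exists a0, S a0 /\ forall a, S a -> Ble M a0 a) /\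
  (forall a, Ble M (Beps M) a) /\
  (forall a a', Ble M (Bmeet M a a') a /\ Ble M (Bmeet M a a') a' /\
     forall c, Ble M c a -> Ble M c a' -> Ble M c (Bmeet M a a')) /\
  (forall a, a <> Beps M ->
     Blt M (Bpred M a) a /\ forall c, Blt M c a -> Ble M c (Bpred M a)) /\
  Bpred M (Beps M) = Beps M.

Definition finite_str (M : Lstr) : Prop :=
  exists l : list (car M), forall x, In x l.

Definition infinite_str (M : Lstr) : Prop := ~ finite_str M.

Definition countably_infinite (M : Lstr) : Prop :=
  exists f : nat -> car M,
    (forall n k, f n = f k -> n = k) /\ (forall x, exists n, f n = x).

Definition card_is (M : Lstr) (P : car M -> Prop) (n : nat) : Prop :=
  exists l : list (car M), NoDup l /\ (forall x, In x l <-> P x) /\ length l = n.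

(* For phi(x, y_1..y_m): x is variable 0, y_j is variable j (1 <= j <= m).
   theta_i(y_1..y_m) uses variables 0..m-1 for y_1..y_m.
   The i-th triple is (d i / N, mu i, theta i), for i < k. *)
Definition asymptotic_class (N : nat) (K : Lstr -> Prop) : Prop :=
  forall (m : nat) (phi : formula), fbound (S m) phi ->
  exists (k : nat) (d : nat -> nat) (mu : nat -> R) (theta : nat -> formula),
    (forall i, (i < k)%nat ->
       (d i <= N)%nat /\ 0 <= mu i /\ (d i <> 0%nat -> 0 < mu i) /\
       fbound m (theta i)) /\
    (forall A, K A -> forall b : list (car A), length b = m ->
       (exists i, (i < k)%nat /\ sat A (env_of A b) (theta i)) /\
       (forall i j, (i < k)%nat -> (j < k)%nat ->
          sat A (env_of A b) (theta i) -> sat A (env_of A b) (theta j) -> i = j)) /\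
    (forall i, (i < k)%nat -> forall eps : R, 0 < eps ->
       exists M : nat, forall A (nA nphi : nat) (b : list (car A)),
         K A -> card_is A (fun _ => True) nA -> (M <= nA)%nat ->
         length b = m -> sat A (env_of A b) (theta i) ->
         card_is A (fun x => sat A (env_of A (x :: b)) phi) nphi ->
         Rabs (INR nphi - mu i * Rpower (INR nA) (INR (d i) / INR N))
           <= eps * Rpower (INR nA) (INR (d i) / INR N)).

Definition ultrafilter {I : Type} (U : (I -> Prop) -> Prop) : Prop :=
  U (fun _ => True) /\
  ~ U (fun _ => False) /\
  (forall A B : I -> Prop, U A -> (forall i, A i -> B i) -> U B) /\
  (forall A B : I -> Prop, U A -> U B -> U (fun i => A i /\ B i)) /\
  (forall A : I -> Prop, U A \/ U (fun i => ~ A i)).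

Definition uprod {I : Type} (F : I -> Lstr) : Type := forall i, car (F i).

Definition ucls {I : Type} (U : (I -> Prop) -> Prop) (F : I -> Lstr)
  (f : uprod F) : uprod F -> Prop := fun g => U (fun i => f i = g i).

Definition ucar {I : Type} (U : (I -> Prop) -> Prop) (F : I -> Lstr) : Type :=
  { P : uprod F -> Prop | exists f, P = ucls U F f }.

Definition umk {I : Type} (U : (I -> Prop) -> Prop) (F : I -> Lstr)
  (f : uprod F) : ucar U F := exist _ (ucls U F f) (ex_intro _ f eq_refl).

Definition urep {I : Type} (U : (I -> Prop) -> Prop) (F : I -> Lstr)
  (P : ucar U F) : uprod F :=
  proj1_sig (constructive_indefinite_description _ (proj2_sig P)).

Definition ultraproduct {I : Type} (U : (I -> Prop) -> Prop) (F : I -> Lstr)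
  : Lstr :=
  {| car := ucar U F;
     Ble := fun P Q => U (fun i => Ble (F i) (urep U F P i) (urep U F Q i));
     Beps := umk U F (fun i => Beps (F i));
     Bmeet := fun P Q => umk U F (fun i => Bmeet (F i) (urep U F P i) (urep U F Q i));
     Bpred := fun P => umk U F (fun i => Bpred (F i) (urep U F P i)) |}.

Definition Th (M : Lstr) : formula -> Prop :=
  fun s => sentence s /\ sat M (fun _ => Beps M) s.

Definition models (M : Lstr) (T : formula -> Prop) : Prop :=
  forall s, T s -> sat M (fun _ => Beps M) s.

Definition isomorphic (M1 M2 : Lstr) : Prop :=
  exists h : car M1 -> car M2,
    (forall x y, h x = h y -> x = y) /\ (forall z, exists x, h x = z) /\
    (forall x y, Ble M1 x y <-> Ble M2 (h x) (h y)) /\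
    h (Beps M1) = Beps M2 /\
    (forall x y, h (Bmeet M1 x y) = Bmeet M2 (h x) (h y)) /\
    (forall x, h (Bpred M1 x) = Bpred M2 (h x)).

Definition aleph0_categorical (T : formula -> Prop) : Prop :=
  forall M1 M2 : Lstr, countably_infinite M1 -> countably_infinite M2 ->
    models M1 T -> models M2 T -> isomorphic M1 M2.

(* Main.v *)
Require Import Defs.
From Stdlib Require Import Reals List Arith Lia Lra Classical ClassicalEpsilon
  FunctionalExtensionality PropExtensionality ProofIrrelevance.
Import ListNotations.
Local Open Scope nat_scope.

Definition up (r : nat -> nat) : nat -> nat :=
  fun n => match n with 0 => 0 | S k => S (r k) end.

Fixpoint trename (r : nat -> nat) (t : term) : term :=
  match t with
  | TVar n => TVar (r n)
  | TEps => TEps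
  | TMeet a b => TMeet (trename r a) (trename r b)
  | TPred a => TPred (trename r a)
  end.

Fixpoint frename (r : nat -> nat) (p : formula) : formula :=
  match p with
  | FEq a b => FEq (trename r a) (trename r b)
  | FLe a b => FLe (trename r a) (trename r b)
  | FFalse => FFalse
  | FNot q => FNot (frename r q)
  | FAnd q1 q2 => FAnd (frename r q1) (frename r q2)
  | FOr q1 q2 => FOr (frename r q1) (frename r q2)
  | FImp q1 q2 => FImp (frename r q1) (frename r q2)
  | FEx q => FEx (frename (up r) q)
  | FAll q => FAll (frename (up r) q)
  end.

Lemma teval_rename M e r t : teval M e (trename r t) = teval M (fun n => e (r n)) t.
Proof. induction t; simpl; congruence. Qed.

Lemma scons_up {A} (x : A) (e : nat -> A) r :
  (fun n => scons x e (up r n)) = scons x (fun n => e (r n)).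
Proof. apply functional_extensionality; intros [|n]; reflexivity. Qed.

Lemma sat_rename M p : forall r e, sat M e (frename r p) <-> sat M (fun n => e (r n)) p.
Proof.
  induction p; intros r e; simpl; try rewrite !teval_rename; try tauto.
  - rewrite IHp; tauto.
  - rewrite IHp1, IHp2; tauto.
  - rewrite IHp1, IHp2; tauto.
  - rewrite IHp1, IHp2; tauto.
  - split; intros [x Hx]; exists x.
    + apply IHp in Hx. rewrite scons_up in Hx. exact Hx.
    + apply IHp. rewrite scons_up. exact Hx.
  - split; intros Hx x; specialize (Hx x).
    + apply IHp in Hx. rewrite scons_up in Hx. exact Hx.
    + apply IHp. rewrite scons_up. exact Hx.
Qed.

Lemma teval_ext_b M n t e e' : tbound n t -> (forall k, (k < n)%nat -> e k = e' k) ->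
  teval M e t = teval M e' t.
Proof. induction t; simpl; intros Hb He.
  - apply He; auto.
  - reflexivity.
  - f_equal; [apply IHt1|apply IHt2]; tauto.
  - f_equal; apply IHt; tauto. Qed.

Lemma sat_ext_b M p : forall n e e', fbound n p -> (forall k, (k < n)%nat -> e k = e' k) ->
  (sat M e p <-> sat M e' p).
Proof.
  induction p; intros n e e' Hb He; simpl in *.
  - rewrite (teval_ext_b M n t e e'), (teval_ext_b M n t0 e e'); tauto.
  - rewrite (teval_ext_b M n t e e'), (teval_ext_b M n t0 e e'); tauto.
  - tauto.
  - rewrite (IHp n e e'); tauto.
  - rewrite (IHp1 n e e'), (IHp2 n e e'); tauto.
  - rewrite (IHp1 n e e'), (IHp2 n e e'); tauto.
  - rewrite (IHp1 n e e'), (IHp2 n e e'); tauto.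
  - split; intros [x Hx]; exists x; [rewrite <- (IHp (S n)) | rewrite (IHp (S n))]; eauto;
      intros [|k] Hk; simpl; auto; apply He; lia.
  - split; intros Hx x; specialize (Hx x); [rewrite <- (IHp (S n)) | rewrite (IHp (S n))]; eauto;
      intros [|k] Hk; simpl; auto; apply He; lia.
Qed.

Lemma tbound_mono n n' t : tbound n t -> (n <= n')%nat -> tbound n' t.
Proof. induction t; simpl; intuition lia. Qed.

Lemma fbound_mono p : forall n n', fbound n p -> (n <= n')%nat -> fbound n' p.
Proof.
  induction p; simpl; intros n n' Hb Hn; intuition eauto using tbound_mono.
  - apply (IHp (S n)); auto; lia.
  - apply (IHp (S n)); auto; lia.
Qed.

Lemma tbound_rename t n n' r : tbound n t -> (forall m, (m < n)%nat -> (r m < n')%nat) ->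
  tbound n' (trename r t).
Proof. induction t; simpl; intuition. Qed.

Lemma fbound_rename p : forall n n' r, fbound n p -> (forall m, (m < n)%nat -> (r m < n')%nat) ->
  fbound n' (frename r p).
Proof.
  induction p; simpl; intros n n' r Hb Hr; intuition eauto using tbound_rename.
  - apply (IHp (S n)); auto. intros [|m] Hm; simpl; [lia|]. specialize (Hr m). lia.
  - apply (IHp (S n)); auto. intros [|m] Hm; simpl; [lia|]. specialize (Hr m). lia.
Qed.

Fixpoint predn (n : nat) (t : term) : term :=
  match n with 0 => t | S n => TPred (predn n t) end.
Fixpoint piter (M : Lstr) (n : nat) (x : car M) : car M :=
  match n with 0 => x | S n => Bpred M (piter M n x) end.

Lemma teval_predn M e n t : teval M e (predn n t) = piter M n (teval M e t).
Proof. induction n; simpl; congruence. Qed.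
Lemma tbound_predn n t k : tbound k t -> tbound k (predn n t).
Proof. induction n; simpl; auto. Qed.
Lemma piter_S_r M n x : piter M (S n) x = piter M n (Bpred M x).
Proof. induction n; simpl in *; congruence. Qed.
Lemma piter_add M n m x : piter M (n + m) x = piter M n (piter M m x).
Proof. induction n; simpl; congruence. Qed.

Fixpoint Exn (k : nat) (p : formula) : formula :=
  match k with 0 => p | S k => Exn k (FEx p) end.

Fixpoint app_env {A} (l : list A) (e : nat -> A) : nat -> A :=
  match l with [] => e | x :: l => scons x (app_env l e) end.

Lemma sat_Exn M k : forall p e, sat M e (Exn k p) <->
  exists l, length l = k /\ sat M (app_env l e) p.
Proof.
  induction k; intros p e; simpl.
  - split. intros H; exists []; auto. intros [l [Hl H]]; destruct l; [exact H|discriminate].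
  - rewrite IHk. split.
    + intros [l [Hl [x Hx]]]. exists (x :: l). simpl; split; auto.
    + intros [l [Hl H]]. destruct l as [|x l]; [discriminate|].
      exists l; split; [simpl in Hl; lia|]. exists x; exact H.
Qed.

Lemma fbound_Exn k : forall p n, fbound (n + k) p -> fbound n (Exn k p).
Proof.
  induction k; intros p n H; simpl.
  - rewrite Nat.add_0_r in H; auto.
  - apply IHk. simpl. replace (S (n + k)) with (n + S k)%nat by lia. auto.
Qed.

Lemma app_env_skip {A} (l : list A) e n : app_env l e (length l + n) = e n.
Proof. induction l; simpl; auto. Qed.

Lemma app_env_nth {A} (l : list A) e d i : (i < length l)%nat -> app_env l e i = nth i l d.
Proof.
  revert i; induction l; simpl; intros i Hi; [lia|].
  destruct i; simpl; auto. apply IHl; lia.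
Qed.

Fixpoint Disj (k : nat) : formula :=
  match k with 0 => FFalse | S k => FOr (Disj k) (FEq (TVar 0) (TVar (S k))) end.

Lemma fbound_Disj k n : (k < n)%nat -> fbound n (Disj k).
Proof. induction k; simpl; intros; auto. split; [apply IHk; lia| split; simpl; lia]. Qed.

Lemma sat_Disj M z l e : forall k, (k <= length l)%nat ->
  (sat M (scons z (app_env l e)) (Disj k) <-> exists i, (i < k)%nat /\ z = nth i l z).
Proof.
  induction k; intros Hk; simpl.
  - split; [tauto|]. intros [i [Hi _]]; lia.
  - rewrite IHk by lia. rewrite (app_env_nth l e z k) by lia. split.
    + intros [[i [Hi Hz]]|Hz]; [exists i; split; auto|exists k; split; auto].
    + intros [i [Hi Hz]]. destruct (Nat.eq_dec i k); [subst; right; auto|].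
      left; exists i; split; auto; lia.
Qed.

Definition amr (k : nat) : nat -> nat := fun n => match n with 0 => 0 | S m => S (k + m) end.

Definition AtMost (k : nat) (p : formula) : formula :=
  Exn k (FAll (FImp (frename (amr k) p) (Disj k))).

Lemma sat_AtMost M k p e : sat M e (AtMost k p) <->
  exists l, length l = k /\ forall z, sat M (scons z e) p -> In z l.
Proof.
  unfold AtMost. rewrite sat_Exn. split; intros [l [Hl H]]; exists l; split; auto;
  [intros z Hz; specialize (H z)|intros z]; simpl in *.
  - assert (E: (fun n => scons z (app_env l e) (amr k n)) = scons z e).
    { apply functional_extensionality; intros [|n]; simpl; auto. subst k. apply app_env_skip. }
    rewrite sat_rename, E in H. apply H in Hz. apply sat_Disj in Hz; [|lia].
    destruct Hz as [i [Hi Hz]]. rewrite Hz. apply nth_In. lia.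
  - intros Hz. rewrite sat_rename in Hz.
    assert (E: (fun n => scons z (app_env l e) (amr k n)) = scons z e).
    { apply functional_extensionality; intros [|n]; simpl; auto. subst k. apply app_env_skip. }
    rewrite E in Hz. apply H in Hz. apply sat_Disj; [lia|].
    apply (In_nth l z z) in Hz. destruct Hz as [i [Hi Hz]]. exists i; split; [lia|auto].
Qed.

Lemma fbound_AtMost k p n : fbound (S n) p -> fbound n (AtMost k p).
Proof.
  intros H. unfold AtMost. apply fbound_Exn. simpl. split.
  - apply (fbound_rename p (S n)); auto. intros [|m] Hm; simpl; lia.
  - apply fbound_Disj; lia.
Qed.

Definition Exactly (n : nat) (p : formula) : formula :=
  match n with 0 => AtMost 0 p | S m => FAnd (AtMost (S m) p) (FNot (AtMost m p)) end.

Lemma fbound_Exactly n p k : fbound (S k) p -> fbound k (Exactly n p).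
Proof. destruct n; intros; [apply fbound_AtMost; auto|]. split; apply fbound_AtMost; auto. Qed.

Definition tt : formula := FEq (TVar 0) (TVar 0).
Section Ultra.
Variables (I : Type) (U : (I -> Prop) -> Prop) (F : I -> Lstr).
Hypothesis hU : ultrafilter U.

Lemma U_mono (A B : I -> Prop) : U A -> (forall i, A i -> B i) -> U B.
Proof. destruct hU as [_ [_ [H _]]]. apply H. Qed.
Lemma U_and (A B : I -> Prop) : U A -> U B -> U (fun i => A i /\ B i).
Proof. destruct hU as [_ [_ [_ [H _]]]]. apply H. Qed.
Lemma U_true : U (fun _ => True).
Proof. destruct hU as [H _]. exact H. Qed.
Lemma U_all (A : I -> Prop) : (forall i, A i) -> U A.
Proof. intros H. apply (U_mono _ _ U_true). auto. Qed.
Lemma U_notF : ~ U (fun _ => False).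
Proof. destruct hU as [_ [H _]]. exact H. Qed.
Lemma U_not (A : I -> Prop) : U (fun i => ~ A i) <-> ~ U A.
Proof.
  split.
  - intros H1 H2. apply U_notF. apply (U_mono _ _ (U_and _ _ H1 H2)). tauto.
  - intros H. destruct hU as [_ [_ [_ [_ H5]]]]. destruct (H5 A); tauto.
Qed.
Lemma U_or (A B : I -> Prop) : U (fun i => A i \/ B i) <-> U A \/ U B.
Proof.
  split.
  - intros H. destruct (classic (U A)) as [HA|HA]; [left; auto|right].
    apply U_not in HA. apply (U_mono _ _ (U_and _ _ H HA)). tauto.
  - intros [H|H]; apply (U_mono _ _ H); tauto.
Qed.

Notation M := (ultraproduct U F).

Lemma urep_spec (P : ucar U F) : proj1_sig P = ucls U F (urep U F P).
Proof. unfold urep. destruct (IndefiniteDescription.constructive_indefinite_description _ (proj2_sig P)) as [f Hf]. exact Hf. Qed.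

Lemma urep_umk (a : uprod F) : U (fun i => urep U F (umk U F a) i = a i).
Proof.
  pose proof (urep_spec (umk U F a)) as H. simpl in H.
  set (f := urep U F (umk U F a)) in *.
  assert (H1 : ucls U F f f) by (apply U_all; auto).
  rewrite <- H in H1. unfold ucls in H1. apply (U_mono _ _ H1). auto.
Qed.

Lemma umk_eq (a b : uprod F) : umk U F a = umk U F b <-> U (fun i => a i = b i).
Proof.
  split.
  - intros H. apply (f_equal (@proj1_sig _ _)) in H. simpl in H.
    assert (H1 : ucls U F b b) by (apply U_all; auto).
    rewrite <- H in H1. exact H1.
  - intros H. unfold umk. apply subset_eq_compat.
    apply functional_extensionality; intros h. apply propositional_extensionality.
    unfold ucls; split; intros H2.
    + apply (U_mono _ _ (U_and _ _ H H2)). intros i [E1 E2]; congruence.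
    + apply (U_mono _ _ (U_and _ _ H H2)). intros i [E1 E2]; congruence.
Qed.

Lemma umk_urep (P : ucar U F) : umk U F (urep U F P) = P.
Proof.
  pose proof (urep_spec P) as H. destruct P as [P0 HP]. unfold umk.
  apply subset_eq_compat. simpl in H. auto.
Qed.

Lemma teval_up (g : nat -> uprod F) t :
  teval M (fun n => umk U F (g n)) t = umk U F (fun i => teval (F i) (fun n => g n i) t).
Proof.
  induction t; simpl; auto.
  - rewrite IHt1, IHt2. apply umk_eq.
    apply (U_mono _ _ (U_and _ _ (urep_umk (fun i => teval (F i) (fun n => g n i) t1))
       (urep_umk (fun i => teval (F i) (fun n => g n i) t2)))). intros i [E1 E2].
    simpl. rewrite E1, E2. reflexivity.
  - rewrite IHt. apply umk_eq. apply (U_mono _ _ (urep_umk (fun i => teval (F i) (fun n => g n i) t))).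
    intros i E1. simpl. rewrite E1; auto.
Qed.

Definition pick (i : I) (Q : car (F i) -> Prop) : car (F i) :=
  match excluded_middle_informative (exists x, Q x) with
  | left H => proj1_sig (constructive_indefinite_description _ H)
  | right _ => Beps (F i) end.
Lemma pick_spec i Q : (exists x, Q x) -> Q (pick i Q).
Proof.
  intros H. unfold pick. destruct excluded_middle_informative; [|tauto].
  destruct constructive_indefinite_description; auto.
Qed.

Lemma env_cons (h : uprod F) (g : nat -> uprod F) :
  scons (umk U F h) (fun n => umk U F (g n)) = fun n => umk U F (scons h g n).
Proof. apply functional_extensionality; intros [|n]; reflexivity. Qed.
Lemma env_cons_i (h : uprod F) (g : nat -> uprod F) i :
  (fun n => scons h g n i) = scons (h i) (fun n => g n i).
Proof. apply functional_extensionality; intros [|n]; reflexivity. Qed.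

Theorem los p : forall g : nat -> uprod F,
  sat M (fun n => umk U F (g n)) p <-> U (fun i => sat (F i) (fun n => g n i) p).
Proof.
  induction p; intros g; simpl.
  - rewrite !teval_up. apply umk_eq.
  - rewrite !teval_up.
    pose proof (U_and _ _ (urep_umk (fun i => teval (F i) (fun n => g n i) t))
       (urep_umk (fun i => teval (F i) (fun n => g n i) t0))) as HE.
    split; intros H.
    + apply (U_mono _ _ (U_and _ _ H HE)).
      intros i [H1 [E1 E2]]. simpl in *. rewrite <- E1, <- E2; auto.
    + apply (U_mono _ _ (U_and _ _ H HE)).
      intros i [H1 [E1 E2]]. simpl in *. rewrite E1, E2; auto.
  - split; [tauto|]. apply U_notF.
  - rewrite IHp. rewrite U_not. tauto.
  - rewrite IHp1, IHp2. split.
    + intros [H1 H2]. apply U_and; auto.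
    + intros H; split; apply (U_mono _ _ H); tauto.
  - rewrite IHp1, IHp2, U_or. tauto.
  - rewrite IHp1, IHp2.
    assert (E : U (fun i => sat (F i) (fun n => g n i) p1 -> sat (F i) (fun n => g n i) p2) <->
                U (fun i => ~ sat (F i) (fun n => g n i) p1 \/ sat (F i) (fun n => g n i) p2)).
    { split; intros H; apply (U_mono _ _ H); intros i; tauto. }
    rewrite E, U_or, U_not. tauto.
  - split.
    + intros [X HX]. rewrite <- (umk_urep X) in HX. rewrite env_cons in HX.
      apply IHp in HX. apply (U_mono _ _ HX). intros i Hi. rewrite env_cons_i in Hi. eauto.
    + intros H. set (h := fun i => pick i (fun x => sat (F i) (scons x (fun n => g n i)) p)).
      exists (umk U F h). rewrite env_cons. apply IHp.
      apply (U_mono _ _ H). intros i Hi. rewrite env_cons_i. apply (pick_spec i _ Hi).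
  - split.
    + intros H. apply NNPP. intros H1. apply U_not in H1.
      set (h := fun i => pick i (fun x => ~ sat (F i) (scons x (fun n => g n i)) p)).
      specialize (H (umk U F h)). rewrite env_cons in H. apply IHp in H.
      apply U_notF. apply (U_mono _ _ (U_and _ _ H H1)). intros i [H2 H3].
      rewrite env_cons_i in H2. apply not_all_ex_not in H3.
      apply (pick_spec i _ H3). exact H2.
    + intros H X. rewrite <- (umk_urep X). rewrite env_cons. apply IHp.
      apply (U_mono _ _ H). intros i Hi. rewrite env_cons_i. apply Hi.
Qed.

End Ultra.

Definition edec {A : Type} : forall x y : A, {x = y} + {x <> y} :=
  fun x y => excluded_middle_informative (x = y).

Definition Cover (A : Lstr) (P : car A -> Prop) (k : nat) : Prop :=
  exists l : list (car A), length l = k /\ forall z, P z -> In z l.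

Lemma Cover_pad A P k k' : (exists l : list (car A), length l <= k /\ forall z, P z -> In z l) ->
  k <= k' -> Cover A P k'.
Proof.
  intros [l [Hl H]] Hk. exists (l ++ repeat (Beps A) (k' - length l)). split.
  - rewrite length_app, repeat_length. lia.
  - intros z Hz. apply in_or_app. left; auto.
Qed.

Lemma card_exists (A : Lstr) (P : car A -> Prop) : finite_str A -> exists n, card_is A P n.
Proof.
  intros [l Hl].
  set (dP := fun x => if excluded_middle_informative (P x) then true else false).
  exists (length (nodup edec (filter dP l))). exists (nodup edec (filter dP l)).
  split; [apply NoDup_nodup|split; auto].
  intros x. rewrite nodup_In, filter_In. unfold dP.
  destruct excluded_middle_informative; intuition; discriminate.
Qed.

Lemma card_unique A P n m : card_is A P n -> card_is A P m -> n = m.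
Proof.
  intros [l1 [N1 [H1 L1]]] [l2 [N2 [H2 L2]]]. subst.
  apply Nat.le_antisymm; apply NoDup_incl_length; auto; intros x Hx.
  - apply H2, H1, Hx.
  - apply H1, H2, Hx.
Qed.

Lemma card_Cover A P n k : card_is A P n -> (Cover A P k <-> n <= k).
Proof.
  intros [l1 [N1 [H1 L1]]]. split.
  - intros [l [Hl H]]. subst. apply NoDup_incl_length; auto. intros x Hx. apply H, H1, Hx.
  - intros Hk. apply (Cover_pad A P n k); auto. exists l1; split; [lia|]. intros z Hz; apply H1; auto.
Qed.

Lemma card_ext A P Q n : (forall x, P x <-> Q x) -> card_is A P n -> card_is A Q n.
Proof. intros E [l [N [H L]]]. exists l; split; auto; split; auto. intros x; rewrite H; auto. Qed.

Lemma card_le_total A P n nA : card_is A P n -> card_is A (fun _ => True) nA -> n <= nA.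
Proof.
  intros [l1 [N1 [H1 L1]]] [l2 [N2 [H2 L2]]]. subst. apply NoDup_incl_length; auto.
  intros x _. apply H2; auto.
Qed.

Lemma nat_least (P : nat -> Prop) : (exists n, P n) -> exists n, P n /\ forall m, P m -> n <= m.
Proof.
  intros [n Hn]. apply NNPP; intros H.
  assert (G : forall k, forall m, m <= k -> ~ P m).
  { induction k; intros m Hm Pm.
    - apply H. exists m; split; auto. intros; lia.
    - destruct (Nat.eq_dec m (S k)).
      + subst. apply H. exists (S k); split; auto. intros m' Pm'.
        destruct (le_lt_dec (S k) m'); auto. exfalso; apply (IHk m'); auto; lia.
      + apply (IHk m); auto; lia. }
  apply (G n n); auto.
Qed.

Section Tree.
Variable A : Lstr.
Hypothesis hT : is_tree A.
Notation le := (Ble A).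
Notation eps := (Beps A).
Notation pr := (Bpred A).

Lemma t_refl x : le x x. Proof. destruct hT as [H _]. apply H. Qed.
Lemma t_anti x y : le x y -> le y x -> x = y. Proof. destruct hT as [_ [H _]]. apply H. Qed.
Lemma t_trans x y z : le x y -> le y z -> le x z. Proof. destruct hT as [_ [_ [H _]]]. apply H. Qed.
Lemma t_epsl x : le eps x. Proof. destruct hT as [_ [_ [_ [_ [_ [H _]]]]]]. apply H. Qed.
Lemma t_meet x y : le (Bmeet A x y) x /\ le (Bmeet A x y) y /\
     forall c, le c x -> le c y -> le c (Bmeet A x y).
Proof. destruct hT as [_ [_ [_ [_ [_ [_ [H _]]]]]]]. apply H. Qed.
Lemma t_pred x : x <> eps -> (le (pr x) x /\ pr x <> x) /\ forall c, le c x /\ c <> x -> le c (pr x).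
Proof. destruct hT as [_ [_ [_ [_ [_ [_ [_ [H _]]]]]]]]. apply H. Qed.
Lemma t_pred0 : pr eps = eps. Proof. destruct hT as [_ [_ [_ [_ [_ [_ [_ [_ H]]]]]]]]. apply H. Qed.

Lemma pred_le x : le (pr x) x.
Proof.
  destruct (edec x eps) as [E|E]; [subst; rewrite t_pred0; apply t_refl|].
  apply (t_pred x E).
Qed.

Lemma below_split y : y <> eps -> forall x, le x y <-> (x = y \/ le x (pr y)).
Proof.
  intros Hy x. split.
  - intros H. destruct (edec x y); [left; auto|right]. apply (t_pred y Hy); auto.
  - intros [E|H]; [subst; apply t_refl|]. apply (t_trans _ _ _ H (pred_le y)).
Qed.

Lemma y_not_le_pred y : y <> eps -> ~ le y (pr y).
Proof. intros Hy H. destruct (t_pred y Hy) as [[H1 H2] _]. apply H2. apply t_anti; auto. Qed.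

Hypothesis hF : finite_str A.

Lemma cnt_pred y n : y <> eps -> card_is A (fun x => le x y) n ->
  1 <= n /\ card_is A (fun x => le x (pr y)) (n - 1).
Proof.
  intros Hy Hc. destruct (card_exists A (fun x => le x (pr y)) hF) as [m Hm].
  assert (Hc2 : card_is A (fun x => le x y) (S m)).
  { destruct Hm as [l [N [H L]]]. exists (y :: l). split; [|split].
    - constructor; auto. rewrite H. apply y_not_le_pred; auto.
    - intros x. rewrite (below_split y Hy x). simpl. rewrite H. intuition.
    - simpl; congruence. }
  pose proof (card_unique _ _ _ _ Hc Hc2). subst n. split; [lia|].
  replace (S m - 1) with m by lia. auto.
Qed.

Lemma cnt_one y : card_is A (fun x => le x y) 1 -> y = eps.
Proof.
  intros Hc. destruct (edec y eps) as [E|E]; auto. exfalso.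
  destruct (cnt_pred y 1 E Hc) as [_ Hc2]. simpl in Hc2.
  destruct Hc2 as [l [_ [H L]]]. destruct l; [|discriminate].
  apply (H (pr y)). apply t_refl.
Qed.

Lemma cnt_pos y n : card_is A (fun x => le x y) n -> 1 <= n.
Proof.
  intros [l [_ [H L]]]. destruct l; simpl in L; [|lia]. exfalso. apply (H y). apply t_refl.
Qed.

Lemma piter_cnt y n : card_is A (fun x => le x y) n ->
  forall j, j < n -> card_is A (fun x => le x (piter A j y)) (n - j).
Proof.
  intros Hc j. induction j; intros Hj.
  - simpl. replace (n - 0) with n by lia. auto.
  - assert (IH := IHj ltac:(lia)). simpl.
    destruct (edec (piter A j y) eps) as [E|E].
    + rewrite E in IH. exfalso.
      assert (Hone : card_is A (fun x => le x eps) 1).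
      { exists [eps]. split; [repeat constructor; simpl; tauto|split; auto].
        intros x; simpl. split; [|intros H; left; apply t_anti; auto; apply t_epsl].
        intros [H|H]; [subst; apply t_refl|destruct H]. }
      pose proof (card_unique _ _ _ _ IH Hone). lia.
    + destruct (cnt_pred _ _ E IH) as [_ H2]. replace (n - S j) with (n - j - 1) by lia. auto.
Qed.

Lemma piter_eps j : piter A j eps = eps.
Proof. induction j; simpl; auto. rewrite IHj. apply t_pred0. Qed.

Lemma piter_top y n : card_is A (fun x => le x y) n -> piter A (n - 1) y = eps.
Proof.
  intros Hc. pose proof (cnt_pos _ _ Hc).
  assert (H2 := piter_cnt y n Hc (n - 1) ltac:(lia)).
  replace (n - (n - 1)) with 1 in H2 by lia. apply cnt_one; exact H2.
Qed.

Lemma piter_le j y : le (piter A j y) y.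
Proof. induction j; simpl; [apply t_refl|]. apply (t_trans _ _ _ (pred_le _) IHj). Qed.

Lemma anc_char n : forall y, card_is A (fun x => le x y) n ->
  forall x, le x y -> exists j, j < n /\ x = piter A j y.
Proof.
  induction n; intros y Hc x Hx.
  - pose proof (cnt_pos _ _ Hc). lia.
  - destruct (edec y eps) as [E|E].
    + subst. exists 0. split; [lia|]. simpl. apply t_anti; auto. apply t_epsl.
    + apply (below_split y E x) in Hx. destruct Hx as [Hx|Hx]; [exists 0; split; [lia|auto]|].
      destruct (cnt_pred _ _ E Hc) as [_ H2]. replace (S n - 1) with n in H2 by lia.
      destruct (IHn _ H2 x Hx) as [j [Hj Ex]]. exists (S j). split; [lia|].
      rewrite piter_S_r. auto.
Qed.

End Tree.

Lemma window_cover (C : nat) : forall n (ws : list R), length ws = n -> forall V : nat,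
  (forall v : nat, C < v <= V -> exists L, In L ws /\ (L <= INR v <= 2 * L)%R) ->
  V + 2 <= (C + 2) * 2 ^ n.
Proof.
  induction n as [n IHn] using lt_wf_ind. intros ws Hn V HV.
  destruct (le_lt_dec V C) as [HVC|HVC].
  { assert (1 <= 2 ^ n) by (apply Nat.neq_0_lt_0, Nat.pow_nonzero; lia). nia. }
  destruct (HV V ltac:(lia)) as [L [HL [HL1 HL2]]].
  assert (HLpos : (0 < L)%R).
  { assert (1 <= INR V)%R by (apply (le_INR 1); lia). lra. }
  destruct (nat_least (fun m => (L <= INR m)%R)) as [n0 [Hn0 Hmin]]; [exists V; auto|].
  assert (n0pos : 1 <= n0).
  { destruct n0; [simpl in Hn0; lra|lia]. }
  set (V' := n0 - 1).
  assert (HV' : (INR V' < L)%R).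
  { destruct (Rlt_or_le (INR V') L) as [H|H]; auto. apply Hmin in H. unfold V' in H. lia. }
  set (ws' := remove Req_dec_T L ws).
  assert (Hlen : length ws' < n) by (subst; apply remove_length_lt; auto).
  assert (IH := IHn (length ws') Hlen ws' eq_refl V').
  assert (Hcov : forall v : nat, C < v <= V' -> exists L', In L' ws' /\ (L' <= INR v <= 2 * L')%R).
  { intros v Hv. assert (Hvle : v <= V).
    { assert (INR v <= INR V')%R by (apply le_INR; lia).
      assert (INR V' < INR V)%R by lra. apply INR_lt in H0. lia. }
    destruct (HV v ltac:(lia)) as [L' [HL' HL'2]]. exists L'. split; auto.
    apply in_in_remove; auto. intros E. subst L'.
    assert (INR v <= INR V')%R by (apply le_INR; lia). lra. }
  specialize (IH Hcov).
  assert (HVn0 : V <= 2 * n0).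
  { assert (INR V <= INR (2 * n0))%R. { rewrite mult_INR. simpl. lra. }
    apply INR_le; auto. }
  assert (2 ^ length ws' * 2 <= 2 ^ n).
  { replace (2 ^ length ws' * 2) with (2 ^ S (length ws')) by (simpl; lia).
    apply Nat.pow_le_mono_r; lia. }
  unfold V' in IH. nia.
Qed.

Lemma fin_bound (Q : nat -> nat -> Prop) k :
  (forall i, i < k -> exists M, Q i M) -> (forall i M M', Q i M -> M <= M' -> Q i M') ->
  exists M, forall i, i < k -> Q i M.
Proof.
  intros H Hm. induction k.
  - exists 0; intros; lia.
  - destruct IHk as [M1 H1]; [intros; apply H; lia|].
    destruct (H k ltac:(lia)) as [M2 H2]. exists (Nat.max M1 M2). intros i Hi.
    destruct (Nat.eq_dec i k); [subst; apply (Hm _ M2); auto; lia|].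
    apply (Hm _ M1); [apply H1; lia|lia].
Qed.

Lemma nat_above (x : R) : exists n : nat, (x <= INR n)%R.
Proof.
  destruct (Rle_or_lt x 0) as [H|H]; [exists 0; simpl; lra|].
  destruct (archimed x) as [H1 _]. exists (Z.to_nat (Rdefinitions.up x)).
  rewrite INR_IZR_INZ, ZifyInst.of_nat_to_nat_eq. apply (Rle_trans _ (IZR (Rdefinitions.up x))); [lra|]. apply IZR_le. lia.
Qed.

Lemma Rabs_le_between x b : (Rabs x <= b -> - b <= x <= b)%R.
Proof. intros H. pose proof (Rle_abs x). pose proof (Rle_abs (- x)). rewrite Rabs_Ropp in H1. lra. Qed.

Lemma Rpower_0 x : Rpower x 0 = 1%R.
Proof. unfold Rpower. rewrite Rmult_0_l. apply exp_0. Qed.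
Lemma Rpower_pos x y : (0 < Rpower x y)%R.
Proof. unfold Rpower. apply exp_pos. Qed.

Lemma Rpower_grow (a : R) : (0 < a)%R -> forall B : R, exists M : nat,
  forall n : nat, M <= n -> (B <= Rpower (INR n) a)%R.
Proof.
  intros Ha B. destruct (nat_above (exp (B / a))) as [M HM]. exists (S M). intros n Hn.
  assert (Hpos : (0 < INR n)%R) by (apply lt_0_INR; lia).
  assert (HnM : (exp (B / a) <= INR n)%R).
  { apply (Rle_trans _ _ _ HM). apply le_INR; lia. }
  unfold Rpower.
  assert (HnM' : (B / a <= ln (INR n))%R).
  { destruct (Rle_lt_or_eq_dec _ _ HnM) as [Hlt|Heq].
    - rewrite <- (ln_exp (B/a)). left. apply ln_increasing; auto. apply exp_pos.
    - rewrite <- Heq, ln_exp. lra. }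
  assert (B <= a * ln (INR n))%R.
  { replace B with (a * (B / a))%R by (field; lra). apply Rmult_le_compat_l; lra. }
  pose proof (exp_ineq1_le (a * ln (INR n))). lra.
Qed.

Section Main.
Variables (N : nat) (K : Lstr -> Prop).
Hypothesis hN : 0 < N.
Hypothesis hK : forall A, K A -> finite_str A /\ is_tree A.
Hypothesis hAC : asymptotic_class N K.

Definition e0 (A : Lstr) : nat -> car A := fun _ => Beps A.
Definition sat1 (A : Lstr) (p : formula) (y : car A) : Prop := sat A (scons y (e0 A)) p.

Lemma env_of1 A y : env_of A [y] = scons y (e0 A).
Proof. apply functional_extensionality; intros [|[|n]]; reflexivity. Qed.
Lemma env_of2 A x y : env_of A [x; y] = scons x (scons y (e0 A)).
Proof. apply functional_extensionality; intros [|[|[|n]]]; reflexivity. Qed.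

Definition ACspec (phi : formula) (k : nat) (d : nat -> nat) (mu : nat -> R)
  (theta : nat -> formula) : Prop :=
    (forall i, (i < k)%nat ->
       (d i <= N)%nat /\ (0 <= mu i)%R /\ (d i <> 0%nat -> (0 < mu i)%R) /\
       fbound 1 (theta i)) /\
    (forall A, K A -> forall b : list (car A), length b = 1 ->
       (exists i, (i < k)%nat /\ sat A (env_of A b) (theta i)) /\
       (forall i j, (i < k)%nat -> (j < k)%nat ->
          sat A (env_of A b) (theta i) -> sat A (env_of A b) (theta j) -> i = j)) /\
    (forall i, (i < k)%nat -> forall eps : R, (0 < eps)%R ->
       exists M : nat, forall A (nA nphi : nat) (b : list (car A)),
         K A -> card_is A (fun _ => True) nA -> (M <= nA)%nat ->
         length b = 1 -> sat A (env_of A b) (theta i) ->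
         card_is A (fun x => sat A (env_of A (x :: b)) phi) nphi ->
         (Rabs (INR nphi - mu i * Rpower (INR nA) (INR (d i) / INR N))
           <= eps * Rpower (INR nA) (INR (d i) / INR N))%R).

Definition ACtup : Type := (nat * (nat -> nat) * (nat -> R) * (nat -> formula))%type.

Lemma AC_ex (p : formula) : exists t : ACtup,
  fbound 2 p -> ACspec p (fst (fst (fst t))) (snd (fst (fst t))) (snd (fst t)) (snd t).
Proof.
  destruct (classic (fbound 2 p)) as [H|H].
  - destruct (hAC 1 p H) as [k [d [mu [theta Hs]]]]. exists (k, d, mu, theta). intros _. exact Hs.
  - exists (0, fun _ => 0, fun _ => 0%R, fun _ => FFalse). tauto.
Qed.

Definition ACt (p : formula) : ACtup :=
  proj1_sig (IndefiniteDescription.constructive_indefinite_description _ (AC_ex p)).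
Definition acK p := fst (fst (fst (ACt p))).
Definition acD p := snd (fst (fst (ACt p))).
Definition acMu p := snd (fst (ACt p)).
Definition acTh p := snd (ACt p).

Lemma AC_spec p : fbound 2 p -> ACspec p (acK p) (acD p) (acMu p) (acTh p).
Proof.
  unfold acK, acD, acMu, acTh, ACt.
  destruct (IndefiniteDescription.constructive_indefinite_description _ (AC_ex p)) as [t Ht]. exact Ht.
Qed.

Lemma ac_piece p i : fbound 2 p -> i < acK p ->
  acD p i <= N /\ (0 <= acMu p i)%R /\ (acD p i <> 0 -> (0 < acMu p i)%R) /\ fbound 1 (acTh p i).
Proof. intros Hb Hi. apply (AC_spec p Hb); auto. Qed.

Lemma ac_part p A y : fbound 2 p -> K A ->
  (exists i, i < acK p /\ sat1 A (acTh p i) y) /\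
  (forall i j, i < acK p -> j < acK p -> sat1 A (acTh p i) y -> sat1 A (acTh p j) y -> i = j).
Proof.
  intros Hb HA. destruct (AC_spec p Hb) as [_ [H _]]. specialize (H A HA [y] eq_refl).
  unfold sat1. rewrite env_of1 in H. exact H.
Qed.

Lemma ac_count p i : fbound 2 p -> i < acK p -> forall eps : R, (0 < eps)%R ->
  exists M : nat, forall A (nA nphi : nat) (y : car A),
    K A -> card_is A (fun _ => True) nA -> M <= nA -> sat1 A (acTh p i) y ->
    card_is A (fun x => sat A (scons x (scons y (e0 A))) p) nphi ->
    (Rabs (INR nphi - acMu p i * Rpower (INR nA) (INR (acD p i) / INR N))
      <= eps * Rpower (INR nA) (INR (acD p i) / INR N))%R.
Proof.
  intros Hb Hi eps Heps. destruct (AC_spec p Hb) as [_ [_ H]].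
  destruct (H i Hi eps Heps) as [M HM]. exists M. intros A nA nphi y HA HnA HM' Hy Hc.
  apply (HM A nA nphi [y]); auto.
  - unfold sat1 in Hy. rewrite env_of1. auto.
  - eapply card_ext; [|exact Hc]. intros x. simpl. rewrite env_of2. tauto.
Qed.

Definition phi_le : formula := FLe (TVar 0) (TVar 1).

Lemma height_bound : exists Hc, forall A, K A -> forall y n,
  card_is A (fun x => Ble A x y) n -> n <= Hc.
Proof.
  assert (Hb : fbound 2 phi_le) by (simpl; lia).
  set (k := acK phi_le). set (d := acD phi_le). set (mu := acMu phi_le). set (th := acTh phi_le).
  set (Q := fun i M => forall A (nA nphi : nat) (y : car A),
    K A -> card_is A (fun _ => True) nA -> M <= nA -> sat1 A (th i) y ->
    card_is A (fun x => Ble A x y) nphi ->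
    (d i = 0 -> (INR nphi <= mu i + 1)%R) /\
    (d i <> 0 -> (2/3 * (mu i * Rpower (INR nA) (INR (d i) / INR N)) <= INR nphi <=
                   2 * (2/3 * (mu i * Rpower (INR nA) (INR (d i) / INR N))))%R)).
  destruct (fin_bound Q k) as [Mx HMx].
  { intros i Hi. destruct (ac_piece phi_le i Hb Hi) as [_ [Hmu0 [Hmu _]]].
    destruct (Nat.eq_dec (d i) 0) as [E|E].
    - destruct (ac_count phi_le i Hb Hi 1%R ltac:(lra)) as [M HM]. exists M.
      intros A nA nphi y HA HnA HM' Hy Hc. split; [|tauto]. intros _.
      specialize (HM A nA nphi y HA HnA HM' Hy Hc). fold d mu in HM.
      rewrite E in HM. simpl in HM. unfold Rdiv in HM. rewrite Rmult_0_l, Rpower_0 in HM.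
      apply Rabs_le_between in HM. lra.
    - specialize (Hmu E). destruct (ac_count phi_le i Hb Hi (mu i / 3) ltac:(unfold mu; lra)) as [M HM].
      exists M. intros A nA nphi y HA HnA HM' Hy Hc. split; [tauto|]. intros _.
      specialize (HM A nA nphi y HA HnA HM' Hy Hc). fold d mu in HM.
      apply Rabs_le_between in HM.
      pose proof (Rpower_pos (INR nA) (INR (d i) / INR N)). fold mu in Hmu. nra. }
  { intros i M M' HQ HMM' A nA nphi y HA HnA HM' Hy Hc. apply (HQ A nA nphi y); auto; lia. }
  destruct (fin_bound (fun i c => d i = 0 -> (mu i + 1 <= INR c)%R) k) as [C HC].
  { intros i Hi. destruct (nat_above (mu i + 1)) as [c Hc]. exists c. auto. }
  { intros i c c' H Hcc' E. apply (Rle_trans _ _ _ (H E)). apply le_INR; auto. }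
  exists (Nat.max ((C + 2) * 2 ^ k) Mx). intros A HA y n Hn.
  destruct (hK A HA) as [HF HT].
  destruct (card_exists A (fun _ => True) HF) as [nA HnA].
  destruct (le_lt_dec Mx nA) as [Hbig|Hsmall].
  2:{ pose proof (card_le_total A _ _ _ Hn HnA). lia. }
  set (ws := map (fun i => (2/3 * (mu i * Rpower (INR nA) (INR (d i) / INR N)))%R) (seq 0 k)).
  assert (Hw := window_cover C k ws ltac:(unfold ws; rewrite length_map, length_seq; auto) n).
  cut (n + 2 <= (C + 2) * 2 ^ k); [lia|]. apply Hw.
  intros v Hv.
  assert (Hz := piter_cnt A HT HF y n Hn (n - v) ltac:(lia)).
  replace (n - (n - v)) with v in Hz by lia.
  set (z := piter A (n - v) y) in *.
  destruct (ac_part phi_le A z Hb HA) as [[i [Hi Hzi]] _].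
  destruct (HMx i Hi A nA v z HA HnA Hbig Hzi Hz) as [H0 H1].
  destruct (Nat.eq_dec (d i) 0) as [E|E].
  - exfalso. specialize (H0 E). specialize (HC i Hi E).
    assert (INR v <= INR C)%R by lra. apply INR_le in H. lia.
  - exists (2/3 * (mu i * Rpower (INR nA) (INR (d i) / INR N)))%R. split; [|apply H1; auto].
    unfold ws. apply in_map_iff. exists i. split; auto. apply in_seq. lia.
Qed.

Definition r01 : nat -> nat := fun n => match n with 0 => 0 | S m => S (S m) end.

Definition chi (tau : formula) : formula :=
  FAnd (FAnd (FNot (FEq (TVar 0) TEps)) (FEq (TPred (TVar 0)) (TVar 1))) (frename r01 tau).

Definition ch (A : Lstr) (tau : formula) (y z : car A) : Prop :=
  z <> Beps A /\ Bpred A z = y /\ sat1 A tau z.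

Lemma sat_chi A tau y z : sat A (scons z (scons y (e0 A))) (chi tau) <-> ch A tau y z.
Proof.
  unfold chi, ch, sat1. simpl. rewrite sat_rename.
  assert (E : (fun n => scons z (scons y (e0 A)) (r01 n)) = scons z (e0 A)).
  { apply functional_extensionality; intros [|n]; reflexivity. }
  rewrite E. tauto.
Qed.

Lemma fbound_chi tau : fbound 1 tau -> fbound 2 (chi tau).
Proof.
  intros H. unfold chi. simpl. split; [lia|]. apply (fbound_rename tau 1); auto.
  intros [|m] Hm; simpl; lia.
Qed.

Definition Pc (tau : formula) : list formula := map (acTh (chi tau)) (seq 0 (acK (chi tau))).

Definition cellsOf (ts : list formula) : list formula :=
  fold_right (fun tau cs => flat_map (fun th => map (FAnd th) cs) (Pc tau)) [tt] ts.

Fixpoint Top (j : nat) : list formula :=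
  match j with 0 => [tt] | S j => cellsOf (Top j) end.

Lemma in_Pc tau th : In th (Pc tau) <-> exists i, i < acK (chi tau) /\ th = acTh (chi tau) i.
Proof.
  unfold Pc. rewrite in_map_iff. split.
  - intros [i [E Hi]]. apply in_seq in Hi. exists i; split; [lia|auto].
  - intros [i [Hi E]]. exists i; split; auto. apply in_seq; lia.
Qed.

Lemma in_cells tau ts s : In s (cellsOf (tau :: ts)) <->
  exists th c, In th (Pc tau) /\ In c (cellsOf ts) /\ s = FAnd th c.
Proof.
  simpl. fold (cellsOf ts). rewrite in_flat_map. split.
  - intros [th [Hth Hs]]. apply in_map_iff in Hs. destruct Hs as [c [E Hc]]. exists th, c; auto.
  - intros [th [c [Hth [Hc E]]]]. exists th; split; auto. apply in_map_iff. exists c; auto.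
Qed.

Lemma cells_fb ts : (forall tau, In tau ts -> fbound 1 tau) ->
  forall s, In s (cellsOf ts) -> fbound 1 s.
Proof.
  induction ts as [|tau ts IH]; intros Hts s Hs.
  - simpl in Hs. destruct Hs as [E|[]]. subst. simpl. lia.
  - apply in_cells in Hs. destruct Hs as [th [c [Hth [Hc E]]]]. subst. simpl. split.
    + apply in_Pc in Hth. destruct Hth as [i [Hi E]]. subst.
      apply (ac_piece (chi tau) i); auto. apply fbound_chi. apply Hts. left; auto.
    + apply IH; auto. intros; apply Hts; right; auto.
Qed.

Lemma Top_fb j : forall s, In s (Top j) -> fbound 1 s.
Proof.
  induction j; intros s Hs.
  - simpl in Hs. destruct Hs as [E|[]]. subst. simpl. lia.
  - simpl in Hs. apply (cells_fb (Top j)); auto.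
Qed.

Lemma cell_sub ts : forall s tau, In s (cellsOf ts) -> In tau ts ->
  exists i, i < acK (chi tau) /\ forall A y, sat1 A s y -> sat1 A (acTh (chi tau) i) y.
Proof.
  induction ts as [|t0 ts IH]; intros s tau Hs Ht; [destruct Ht|].
  apply in_cells in Hs. destruct Hs as [th [c [Hth [Hc E]]]]. subst.
  destruct Ht as [Ht|Ht].
  - subst. apply in_Pc in Hth. destruct Hth as [i [Hi E]]. subst. exists i; split; auto.
    intros A y [H _]; auto.
  - destruct (IH c tau Hc Ht) as [i [Hi H]]. exists i; split; auto. intros A y [_ H2]; auto.
Qed.

Lemma cells_part A ts : K A -> (forall tau, In tau ts -> fbound 1 tau) -> forall y,
  (exists s, In s (cellsOf ts) /\ sat1 A s y) /\
  (forall s s', In s (cellsOf ts) -> In s' (cellsOf ts) -> sat1 A s y -> sat1 A s' y -> s = s').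
Proof.
  intros HA. induction ts as [|tau ts IH]; intros Hts y.
  - split.
    + exists tt. split; [left; auto|]. unfold sat1; simpl; auto.
    + intros s s' [E|[]] [E'|[]]; congruence.
  - assert (Hb : fbound 2 (chi tau)) by (apply fbound_chi, Hts; left; auto).
    destruct (IH (fun t H => Hts t (or_intror H)) y) as [[c [Hc Hcy]] Hu].
    destruct (ac_part (chi tau) A y Hb HA) as [[i [Hi Hiy]] Hpu].
    split.
    + exists (FAnd (acTh (chi tau) i) c). split.
      * apply in_cells. exists (acTh (chi tau) i), c. split; [apply in_Pc; eauto|auto].
      * unfold sat1 in *; simpl; auto.
    + intros s s' Hs Hs' Hsy Hs'y. apply in_cells in Hs, Hs'.
      destruct Hs as [th [c1 [Hth [Hc1 E1]]]]. destruct Hs' as [th' [c1' [Hth' [Hc1' E1']]]].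
      subst. destruct Hsy as [Hsy1 Hsy2]. destruct Hs'y as [Hs'y1 Hs'y2].
      apply in_Pc in Hth, Hth'. destruct Hth as [i1 [Hi1 E1]]. destruct Hth' as [i2 [Hi2 E2]].
      subst. rewrite (Hpu i1 i2 Hi1 Hi2 Hsy1 Hs'y1). f_equal. apply Hu; auto.
Qed.

Lemma Top_part A j y : K A ->
  (exists s, In s (Top j) /\ sat1 A s y) /\
  (forall s s', In s (Top j) -> In s' (Top j) -> sat1 A s y -> sat1 A s' y -> s = s').
Proof.
  intros HA. destruct j.
  - simpl. split; [exists tt; split; [left; auto|unfold sat1; simpl; auto]|].
    intros s s' [E|[]] [E'|[]]; congruence.
  - simpl. apply cells_part; auto. apply Top_fb.
Qed.

Definition cspec (tau : formula) (i : nat) (o : option nat) : Prop :=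
  match o with
  | Some n => exists M, forall A nA y, K A -> card_is A (fun _ => True) nA -> M <= nA ->
      sat1 A (acTh (chi tau) i) y -> card_is A (ch A tau y) n
  | None => forall m, exists M, forall A nA y, K A -> card_is A (fun _ => True) nA -> M <= nA ->
      sat1 A (acTh (chi tau) i) y -> ~ Cover A (ch A tau y) m
  end.

Lemma INR_close (a b : nat) : (Rabs (INR a - INR b) < 1)%R -> a = b.
Proof.
  intros H. apply Rabs_def2 in H. destruct H as [H1 H2].
  destruct (lt_eq_lt_dec a b) as [[Hl|He]|Hl]; auto; exfalso.
  - apply le_INR in Hl. rewrite S_INR in Hl. lra.
  - apply le_INR in Hl. rewrite S_INR in Hl. lra.
Qed.

Lemma cspec_ex tau i : fbound 1 tau -> i < acK (chi tau) -> exists o, cspec tau i o.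
Proof.
  intros Hb Hi. assert (Hb2 := fbound_chi tau Hb).
  destruct (ac_piece (chi tau) i Hb2 Hi) as [_ [Hmu0 [Hmu _]]].
  destruct (Nat.eq_dec (acD (chi tau) i) 0) as [E|E].
  - destruct (ac_count (chi tau) i Hb2 Hi (1/3)%R ltac:(lra)) as [M HM].
    assert (HM' : forall A nA n y, K A -> card_is A (fun _ => True) nA -> M <= nA ->
      sat1 A (acTh (chi tau) i) y -> card_is A (ch A tau y) n ->
      (Rabs (INR n - acMu (chi tau) i) <= 1/3)%R).
    { intros A nA n y HA HnA HMn Hy Hc.
      specialize (HM A nA n y HA HnA HMn Hy).
      rewrite E in HM. change (INR 0) with 0%R in HM. unfold Rdiv in HM. rewrite Rmult_0_l, Rpower_0, !Rmult_1_r in HM.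
      apply HM. eapply card_ext; [|exact Hc]. intros x. rewrite sat_chi. tauto. }
    destruct (classic (exists A nA y, K A /\ card_is A (fun _ => True) nA /\ M <= nA /\
                 sat1 A (acTh (chi tau) i) y)) as [Hex|Hnex].
    + destruct Hex as [A [nA [y [HA [HnA [HMn Hy]]]]]].
      destruct (card_exists A (ch A tau y) (proj1 (hK A HA))) as [n0 Hn0].
      exists (Some n0). exists M. intros A' nA' y' HA' HnA' HMn' Hy'.
      destruct (card_exists A' (ch A' tau y') (proj1 (hK A' HA'))) as [n1 Hn1].
      replace n0 with n1; auto. apply INR_close.
      pose proof (HM' A nA n0 y HA HnA HMn Hy Hn0). pose proof (HM' A' nA' n1 y' HA' HnA' HMn' Hy' Hn1).
      apply Rabs_le_between in H. apply Rabs_le_between in H0. apply Rabs_def1; lra.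
    + exists (Some 0). exists M. intros A nA y HA HnA HMn Hy. exfalso. apply Hnex. eauto 10.
  - specialize (Hmu E). exists None. intros m.
    destruct (ac_count (chi tau) i Hb2 Hi (acMu (chi tau) i / 2)%R ltac:(lra)) as [M1 HM1].
    assert (Hpos : (0 < INR (acD (chi tau) i) / INR N)%R).
    { apply Rdiv_lt_0_compat; apply lt_0_INR; lia. }
    destruct (Rpower_grow _ Hpos (2 * (INR m + 1) / acMu (chi tau) i)%R) as [M2 HM2].
    exists (Nat.max M1 M2). intros A nA y HA HnA HMn Hy Hcov.
    destruct (card_exists A (ch A tau y) (proj1 (hK A HA))) as [n Hn].
    assert (Hle := proj1 (card_Cover _ _ _ _ Hn) Hcov).
    specialize (HM1 A nA n y HA HnA ltac:(lia) Hy).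
    assert (Hc : card_is A (fun x => sat A (scons x (scons y (e0 A))) (chi tau)) n).
    { eapply card_ext; [|exact Hn]. intros x. rewrite sat_chi. tauto. }
    specialize (HM1 Hc). apply Rabs_le_between in HM1.
    specialize (HM2 nA ltac:(lia)).
    set (P := Rpower (INR nA) (INR (acD (chi tau) i) / INR N)) in *.
    assert (HmP : (2 * (INR m + 1) <= acMu (chi tau) i * P)%R).
    { apply (Rmult_le_compat_l (acMu (chi tau) i)) in HM2; [|lra].
      replace (acMu (chi tau) i * (2 * (INR m + 1) / acMu (chi tau) i))%R with (2 * (INR m + 1))%R
        in HM2 by (field; lra). lra. }
    assert (INR n <= INR m)%R by (apply le_INR; auto). lra.
Qed.

Lemma cnt_ex (tau : formula) (i : nat) : exists o, fbound 1 tau -> i < acK (chi tau) -> cspec tau i o.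
Proof.
  destruct (classic (fbound 1 tau /\ i < acK (chi tau))) as [[H1 H2]|H].
  - destruct (cspec_ex tau i H1 H2) as [o Ho]. exists o; auto.
  - exists None. intros; tauto.
Qed.

Definition cnt (tau : formula) (i : nat) : option nat :=
  proj1_sig (IndefiniteDescription.constructive_indefinite_description _ (cnt_ex tau i)).

Lemma cnt_spec tau i : fbound 1 tau -> i < acK (chi tau) -> cspec tau i (cnt tau i).
Proof.
  unfold cnt. destruct (IndefiniteDescription.constructive_indefinite_description _ (cnt_ex tau i)). auto.
Qed.

Definition Hd : nat := proj1_sig (IndefiniteDescription.constructive_indefinite_description _ height_bound).
Lemma Hd_spec A : K A -> forall y n, card_is A (fun x => Ble A x y) n -> n <= Hd.
Proof. intros HA y n Hn. unfold Hd.
  destruct (IndefiniteDescription.constructive_indefinite_description _ height_bound) as [h Hh].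
  simpl. eapply Hh; eauto. Qed.

Fixpoint DisjP (n : nat) : formula :=
  match n with
  | 0 => FEq (TVar 1) (TVar 0)
  | S n => FOr (DisjP n) (FEq (TVar 1) (predn (S n) (TVar 0))) end.

Lemma sat_DisjP A e x y n : sat A (scons y (scons x e)) (DisjP n) <-> exists j, j <= n /\ x = piter A j y.
Proof.
  induction n; simpl.
  - split; [intros H; exists 0; auto|intros [j [Hj H]]; replace j with 0 in H by lia; auto].
  - rewrite IHn. rewrite teval_predn. simpl. split.
    + intros [[j [Hj H]]|H]; [exists j; split; auto|exists (S n); split; auto].
    + intros [j [Hj H]]. destruct (Nat.eq_dec j (S n)); [subst; right; auto|].
      left; exists j; split; auto; lia.
Qed.

Definition T1 : formula := FAll (FEq (predn Hd (TVar 0)) TEps).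
Definition T2 : formula := FAll (FAll (FAnd (FImp (FLe (TVar 1) (TVar 0)) (DisjP Hd))
                                     (FImp (DisjP Hd) (FLe (TVar 1) (TVar 0))))).
Definition T3 : formula := FAll (FAll (FAnd (FLe (TMeet (TVar 1) (TVar 0)) (TVar 1))
  (FAnd (FLe (TMeet (TVar 1) (TVar 0)) (TVar 0))
   (FAll (FImp (FAnd (FLe (TVar 0) (TVar 2)) (FLe (TVar 0) (TVar 1)))
               (FLe (TVar 0) (TMeet (TVar 2) (TVar 1)))))))).
Definition T4 : formula := FAll (FAll (FImp (FAnd (FLe (TVar 1) (TVar 0)) (FLe (TVar 0) (TVar 1)))
                                     (FEq (TVar 1) (TVar 0)))).
Definition T5 : formula := FEq (TPred TEps) TEps.

Fixpoint DisjL (l : list formula) : formula :=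
  match l with [] => FFalse | s :: l => FOr s (DisjL l) end.

Lemma sat_DisjL A e l : sat A e (DisjL l) <-> exists s, In s l /\ sat A e s.
Proof.
  induction l; simpl; [split; [tauto|intros [s [[] _]]]|].
  rewrite IHl. split.
  - intros [H|[s [Hs H]]]; [exists a; auto|exists s; auto].
  - intros [s [[E|Hs] H]]; [subst; left; auto|right; exists s; auto].
Qed.

Lemma fbound_DisjL l n : (forall s, In s l -> fbound n s) -> fbound n (DisjL l).
Proof. induction l; simpl; auto. Qed.

Inductive Ax : formula -> Prop :=
| ax1 : Ax T1 | ax2 : Ax T2 | ax3 : Ax T3 | ax4 : Ax T4 | ax5 : Ax T5
| ax_cov j : Ax (FAll (DisjL (Top j)))
| ax_dis j s s' : In s (Top j) -> In s' (Top j) -> s <> s' -> Ax (FAll (FNot (FAnd s s')))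
| ax_cnt j tau i n : In tau (Top j) -> i < acK (chi tau) -> cnt tau i = Some n ->
    Ax (FAll (FImp (acTh (chi tau) i) (Exactly n (chi tau))))
| ax_inf j tau i m : In tau (Top j) -> i < acK (chi tau) -> cnt tau i = None ->
    Ax (FAll (FImp (acTh (chi tau) i) (FNot (AtMost m (chi tau))))).

Lemma Ax_sentence s : Ax s -> sentence s.
Proof.
  unfold sentence. intros H; destruct H; simpl.
  - split; [apply tbound_predn; simpl; lia|simpl; auto].
  - assert (fbound 2 (DisjP Hd)).
    { clear. induction Hd; simpl; [lia|]. split; auto. split; [lia|]. apply tbound_predn. simpl; lia. }
    repeat split; auto; lia.
  - repeat split; lia.
  - repeat split; lia.
  - auto.
  - apply fbound_DisjL. apply Top_fb.
  - split; apply (Top_fb j); auto.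
  - assert (Hb := Top_fb j tau H). split.
    + apply (ac_piece (chi tau) i); auto. apply fbound_chi; auto.
    + apply fbound_Exactly. apply fbound_chi; auto.
  - assert (Hb := Top_fb j tau H). split.
    + apply (ac_piece (chi tau) i); auto. apply fbound_chi; auto.
    + apply fbound_AtMost. apply fbound_chi; auto.
Qed.

Lemma Cover_ext A P Q k : (forall x, P x <-> Q x) -> Cover A P k -> Cover A Q k.
Proof. intros E [l [Hl H]]. exists l; split; auto. intros z Hz; apply H, E, Hz. Qed.

Lemma sat_AtMost_ch A tau y m : sat A (scons y (e0 A)) (AtMost m (chi tau)) <-> Cover A (ch A tau y) m.
Proof.
  rewrite sat_AtMost. unfold Cover. split; intros [l [Hl H]]; exists l; split; auto;
  intros z Hz; apply H; apply sat_chi; auto.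
Qed.

Lemma sat_Exactly_ch A tau y n : sat A (scons y (e0 A)) (Exactly n (chi tau)) <->
  Cover A (ch A tau y) n /\ (n = 0 \/ ~ Cover A (ch A tau y) (n - 1)).
Proof.
  destruct n; simpl Exactly.
  - rewrite sat_AtMost_ch. tauto.
  - simpl sat. rewrite !sat_AtMost_ch. replace (S n - 1) with n by lia. intuition lia.
Qed.

Lemma Ax_large s : Ax s -> exists M, forall A nA, K A -> card_is A (fun _ => True) nA -> M <= nA ->
  sat A (e0 A) s.
Proof.
  intros H. destruct H.
  - exists 0. intros A nA HA _ _. destruct (hK A HA) as [HF HT]. simpl. intros y.
    rewrite teval_predn. simpl.
    destruct (card_exists A (fun x => Ble A x y) HF) as [n Hn].
    pose proof (Hd_spec A HA y n Hn). pose proof (cnt_pos A HT y n Hn).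
    replace Hd with ((Hd - (n - 1)) + (n - 1)) by lia. rewrite piter_add.
    rewrite (piter_top A HT HF y n Hn). apply piter_eps; auto.
  - exists 0. intros A nA HA _ _. destruct (hK A HA) as [HF HT]. simpl. intros x y.
    rewrite sat_DisjP. split.
    + intros Hxy. destruct (card_exists A (fun x => Ble A x y) HF) as [n Hn].
      destruct (anc_char A HT HF n y Hn x Hxy) as [j [Hj E]]. exists j; split; auto.
      pose proof (Hd_spec A HA y n Hn). lia.
    + intros [j [_ E]]. subst. apply piter_le; auto.
  - exists 0. intros A nA HA _ _. destruct (hK A HA) as [HF HT]. simpl. intros x y.
    destruct (t_meet A HT x y) as [H1 [H2 H3]]. repeat split; auto. intros c [Hc1 Hc2]; auto.
  - exists 0. intros A nA HA _ _. destruct (hK A HA) as [HF HT]. simpl. intros x y [H1 H2].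
    apply t_anti; auto.
  - exists 0. intros A nA HA _ _. destruct (hK A HA) as [HF HT]. simpl. apply t_pred0; auto.
  - exists 0. intros A nA HA _ _. simpl. intros y. apply sat_DisjL.
    destruct (Top_part A j y HA) as [[s [Hs Hsy]] _]. exists s; auto.
  - exists 0. intros A nA HA _ _. simpl. intros y [Hy1 Hy2].
    destruct (Top_part A j y HA) as [_ Hu]. match goal with Hne : _ <> _ |- _ => apply Hne end. apply Hu; auto.
  - pose proof (cnt_spec tau i (Top_fb j tau H) H0) as Hs. rewrite H1 in Hs.
    destruct Hs as [M HM]. exists M. intros A nA HA HnA HMn. simpl. intros y Hy.
    apply sat_Exactly_ch. specialize (HM A nA y HA HnA HMn Hy). split.
    + apply (card_Cover _ _ _ _ HM). lia.
    + destruct n; [left; auto|right]. rewrite (card_Cover _ _ _ _ HM). lia.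
  - pose proof (cnt_spec tau i (Top_fb j tau H) H0) as Hs. rewrite H1 in Hs.
    destruct (Hs m) as [M HM]. exists M. intros A nA HA HnA HMn. simpl. intros y Hy.
    rewrite sat_AtMost_ch. apply (HM A nA y); auto.
Qed.

Definition GoodModel (M : Lstr) : Prop := forall s, Ax s -> sat M (e0 M) s.

Section GM.
Variable M : Lstr.
Hypothesis hM : GoodModel M.

Lemma gm1 y : piter M Hd y = Beps M.
Proof. pose proof (hM T1 ax1) as H. simpl in H. specialize (H y). rewrite teval_predn in H. exact H. Qed.
Lemma gm2 x y : Ble M x y <-> exists j, j <= Hd /\ x = piter M j y.
Proof. pose proof (hM T2 ax2) as H. simpl in H. specialize (H x y). rewrite sat_DisjP in H. tauto. Qed.
Lemma gm3 x y : Ble M (Bmeet M x y) x /\ Ble M (Bmeet M x y) y /\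
  forall c, Ble M c x -> Ble M c y -> Ble M c (Bmeet M x y).
Proof. pose proof (hM T3 ax3) as H. simpl in H. specialize (H x y). intuition. Qed.
Lemma gm4 x y : Ble M x y -> Ble M y x -> x = y.
Proof. pose proof (hM T4 ax4) as H. simpl in H. intros; apply H; auto. Qed.
Lemma gm5 : Bpred M (Beps M) = Beps M.
Proof. apply (hM T5 ax5). Qed.
Lemma gm_cov j y : exists s, In s (Top j) /\ sat1 M s y.
Proof. pose proof (hM _ (ax_cov j)) as H. simpl in H. specialize (H y). apply sat_DisjL in H. exact H. Qed.
Lemma gm_dis j s s' y : In s (Top j) -> In s' (Top j) -> sat1 M s y -> sat1 M s' y -> s = s'.
Proof.
  intros H1 H2 H3 H4. apply NNPP. intros Hne. pose proof (hM _ (ax_dis j s s' H1 H2 Hne)) as H.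
  simpl in H. apply (H y). split; auto.
Qed.
Lemma gm_cnt j tau i n y : In tau (Top j) -> i < acK (chi tau) -> cnt tau i = Some n ->
  sat1 M (acTh (chi tau) i) y ->
  Cover M (ch M tau y) n /\ (n = 0 \/ ~ Cover M (ch M tau y) (n - 1)).
Proof.
  intros H1 H2 H3 H4. pose proof (hM _ (ax_cnt j tau i n H1 H2 H3)) as H. simpl in H.
  apply sat_Exactly_ch. apply H. exact H4.
Qed.
Lemma gm_inf j tau i m y : In tau (Top j) -> i < acK (chi tau) -> cnt tau i = None ->
  sat1 M (acTh (chi tau) i) y -> ~ Cover M (ch M tau y) m.
Proof.
  intros H1 H2 H3 H4. pose proof (hM _ (ax_inf j tau i m H1 H2 H3)) as H. simpl in H.
  rewrite <- sat_AtMost_ch. apply H. exact H4.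
Qed.

End GM.

Definition depth (M : Lstr) (x : car M) (l : nat) : Prop :=
  piter M l x = Beps M /\ forall j, j < l -> piter M j x <> Beps M.

Definition Typ (l : nat) : list formula := Top (S Hd - l).

Definition Good (M M' : Lstr) (f : list (car M * car M')) : Prop :=
  In (Beps M, Beps M') f /\
  (forall a a', In (a, a') f -> In (Bpred M a, Bpred M' a') f) /\
  (forall a a' b b', In (a, a') f -> In (b, b') f -> (a = b <-> a' = b')) /\
  (forall a a' l, In (a, a') f -> depth M a l -> forall s, In s (Typ l) -> (sat1 M s a <-> sat1 M' s a')).

Definition swp {X Y : Type} (p : X * Y) : Y * X := (snd p, fst p).

Lemma in_swp {X Y : Type} (f : list (X * Y)) a b : In (a, b) (map swp f) <-> In (b, a) f.
Proof.
  rewrite in_map_iff. split.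
  - intros [[u v] [E H]]. unfold swp in E; simpl in E. inversion E; subst; auto.
  - intros H. exists (b, a); auto.
Qed.

Lemma swp_swp {X Y : Type} (f : list (X * Y)) : map swp (map swp f) = f.
Proof. induction f as [|[u v] f IH]; simpl; auto. rewrite IH; auto. Qed.

Lemma depth_unique M x l l' : depth M x l -> depth M x l' -> l = l'.
Proof.
  intros [H1 H2] [H1' H2']. destruct (lt_eq_lt_dec l l') as [[H|H]|H]; auto.
  - exfalso; apply (H2' l H H1).
  - exfalso; apply (H2 l' H H1').
Qed.

Lemma depth_S M x l : depth M x (S l) -> x <> Beps M /\ depth M (Bpred M x) l.
Proof.
  intros [H1 H2]. split; [apply (H2 0); lia|]. split.
  - rewrite <- piter_S_r. auto.
  - intros j Hj. rewrite <- piter_S_r. apply H2. lia.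
Qed.

Lemma depth_child M x l : x <> Beps M -> depth M (Bpred M x) l -> depth M x (S l).
Proof.
  intros Hx [H1 H2]. split.
  - rewrite piter_S_r. auto.
  - intros [|j] Hj; simpl; auto. change (piter M (S j) x <> Beps M).
    rewrite piter_S_r. apply H2. lia.
Qed.

Lemma depth_ex M : GoodModel M -> forall x, exists l, l <= Hd /\ depth M x l.
Proof.
  intros hM x. destruct (nat_least (fun l => piter M l x = Beps M)) as [l [Hl Hmin]].
  - exists Hd. apply gm1; auto.
  - exists l. split; [apply Hmin, gm1; auto|]. split; auto.
    intros j Hj E. apply Hmin in E. lia.
Qed.

Lemma Good_swap M M' f : Good M M' f -> Good M' M (map swp f).
Proof.
  intros [G1 [G2 [G3 G4]]]. split; [|split; [|split]].
  - apply (proj2 (in_swp f _ _)); auto.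
  - intros a a' H. apply (proj1 (in_swp f _ _)) in H. apply (proj2 (in_swp f _ _)). apply G2. exact H.
  - intros a a' b b' Ha Hb. apply (proj1 (in_swp f _ _)) in Ha. apply (proj1 (in_swp f _ _)) in Hb.
    rewrite (G3 _ _ _ _ Ha Hb). tauto.
  - intros a a' l Ha Hd s Hs. apply (proj1 (in_swp f _ _)) in Ha.
    assert (Hd' : depth M a' l).
    { destruct Hd as [D1 D2].
      assert (Hit : forall j, In (piter M j a', piter M' j a) f).
      { induction j; simpl; auto. }
      split.
      - apply (G3 _ _ _ _ (Hit l) G1). auto.
      - intros j Hj E. apply (D2 j Hj). apply (G3 _ _ _ _ (Hit j) G1). auto. }
    rewrite (G4 _ _ _ Ha Hd' s Hs). tauto.
Qed.

Section EF.
Variables M M' : Lstr.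
Hypothesis hM : GoodModel M.
Hypothesis hM' : GoodModel M'.

Lemma G_iter f : Good M M' f -> forall a a' j, In (a, a') f -> In (piter M j a, piter M' j a') f.
Proof. intros [G1 [G2 _]] a a' j H. induction j; simpl; auto. Qed.

Lemma depth_pres f a a' l : Good M M' f -> In (a, a') f -> (depth M a l <-> depth M' a' l).
Proof.
  intros HG H. pose proof (G_iter f HG a a') as Hit. destruct HG as [G1 [_ [G3 _]]].
  unfold depth. split; intros [D1 D2]; split.
  - apply (G3 _ _ _ _ (Hit l H) G1). auto.
  - intros j Hj E. apply (D2 j Hj). apply (G3 _ _ _ _ (Hit j H) G1). auto.
  - apply (G3 _ _ _ _ (Hit l H) G1). auto.
  - intros j Hj E. apply (D2 j Hj). apply (G3 _ _ _ _ (Hit j H) G1). auto.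
Qed.

Lemma le_rel f x x' y y' : Good M M' f -> In (x, x') f -> In (y, y') f ->
  (Ble M x y <-> Ble M' x' y').
Proof.
  intros HG Hx Hy. rewrite (gm2 M hM), (gm2 M' hM').
  pose proof (G_iter f HG y y') as Hit. destruct HG as [_ [_ [G3 _]]].
  split; intros [j [Hj E]]; exists j; split; auto.
  - apply (G3 _ _ _ _ Hx (Hit j Hy)). auto.
  - apply (G3 _ _ _ _ Hx (Hit j Hy)). auto.
Qed.

Lemma meet_rel f a a' b b' : Good M M' f -> In (a, a') f -> In (b, b') f ->
  In (Bmeet M a b, Bmeet M' a' b') f.
Proof.
  intros HG Ha Hb.
  destruct (gm3 M hM a b) as [Ma [Mb Mc]]. destruct (gm3 M' hM' a' b') as [Ma' [Mb' Mc']].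
  destruct (proj1 (gm2 M hM _ _) Ma) as [j [Hj Ej]].
  set (m' := piter M' j a').
  assert (Hm : In (Bmeet M a b, m') f) by (rewrite Ej; apply G_iter; auto).
  assert (E : m' = Bmeet M' a' b').
  { apply (gm4 M' hM').
    - apply Mc'; [apply (le_rel f _ _ _ _ HG Hm Ha)|apply (le_rel f _ _ _ _ HG Hm Hb)]; auto.
    - destruct (proj1 (gm2 M' hM' _ _) Ma') as [j' [Hj' Ej']].
      assert (Hn : In (piter M j' a, Bmeet M' a' b') f) by (rewrite Ej'; apply G_iter; auto).
      apply (le_rel f _ _ _ _ HG Hn Hm). apply Mc.
      + apply (gm2 M hM). exists j'; split; auto.
      + apply (le_rel f _ _ _ _ HG Hn Hb). auto. }
  rewrite <- E. auto.
Qed.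

Lemma term_rel f e e' : Good M M' f -> (forall n, In (e n, e' n) f) ->
  forall t, In (teval M e t, teval M' e' t) f.
Proof.
  intros HG He t. induction t; simpl; auto.
  - apply HG.
  - apply meet_rel; auto.
  - apply HG; auto.
Qed.

Definition img (f : list (car M * car M')) (c : car M) : car M' :=
  match excluded_middle_informative (exists c', In (c, c') f) with
  | left H => proj1_sig (IndefiniteDescription.constructive_indefinite_description _ H)
  | right _ => Beps M' end.
Lemma img_spec f c : (exists c', In (c, c') f) -> In (c, img f c) f.
Proof.
  intros H. unfold img. destruct excluded_middle_informative; [|tauto].
  destruct IndefiniteDescription.constructive_indefinite_description; auto.
Qed.

Lemma forth_l : forall l f x, Good M M' f -> depth M x l ->
  exists g x', Good M M' g /\ incl f g /\ In (x, x') g.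
Proof.
  induction l; intros f x HG Hx.
  - exists f, (Beps M'). split; auto. split; [intros z; auto|].
    destruct Hx as [Hx _]. simpl in Hx. subst. apply HG.
  - destruct (depth_S M x l Hx) as [Hxe Hpx].
    destruct (IHl f (Bpred M x) HG Hpx) as [g1 [p' [HG1 [Hinc1 Hp]]]].
    destruct (classic (exists x', In (x, x') g1)) as [[x' Hx']|Hnot].
    { exists g1, x'. split; auto. }
    set (p := Bpred M x) in *.
    assert (Hl : S l <= Hd).
    { destruct (depth_ex M hM x) as [l' [Hl' Hd']]. rewrite (depth_unique M x (S l) l' Hx Hd'). auto. }
    assert (ET1 : Typ l = cellsOf (Top (Hd - l))).
    { unfold Typ. replace (S Hd - l) with (S (Hd - l)) by lia. reflexivity. }
    assert (ET2 : Typ (S l) = Top (Hd - l)).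
    { unfold Typ. reflexivity. }
    destruct (gm_cov M hM (Hd - l) x) as [tau [Htau Htx]].
    destruct (gm_cov M hM (S (Hd - l)) p) as [sg [Hsg Hsp]]. simpl in Hsg.
    destruct (cell_sub _ sg tau Hsg Htau) as [i [Hi Hsub]].
    assert (Hsp' : sat1 M' sg p').
    { destruct HG1 as [_ [_ [_ G4]]]. rewrite <- (G4 p p' l Hp Hpx sg); auto. rewrite ET1; auto. }
    assert (Hthp := Hsub M p Hsp). assert (Hthp' := Hsub M' p' Hsp').
    assert (Hchx : ch M tau p x) by (repeat split; auto).
    pose proof HG1 as HG1'. destruct HG1' as [G1 [G2 [G3 G4]]].
    assert (Hpre : forall z', ch M' tau p' z' -> In z' (map snd g1) ->
              exists z, In (z, z') g1 /\ ch M tau p z /\ z <> x).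
    { intros z' [Hz'e [Hz'p Hz't]] Hin. apply in_map_iff in Hin.
      destruct Hin as [[z z0'] [E Hin]]. simpl in E. subst z0'.
      exists z. split; auto. split; [|intros E; subst; apply Hnot; eauto].
      split; [|split].
      - intros E. subst. apply Hz'e. apply (G3 _ _ _ _ Hin G1). auto.
      - apply (G3 _ _ _ _ (G2 _ _ Hin) Hp). rewrite Hz'p. auto.
      - assert (Hdz' : depth M' z' (S l)).
        { apply depth_child; auto. rewrite Hz'p. apply (depth_pres g1 p p' l HG1 Hp). auto. }
        apply (depth_pres g1 z z' (S l) HG1 Hin) in Hdz'.
        unfold sat1 in *. rewrite (G4 z z' (S l) Hin Hdz' tau); auto; try (rewrite ET2; auto). }
    assert (Hnew : exists x', ch M' tau p' x' /\ ~ In x' (map snd g1)).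
    { apply NNPP. intros Hno.
      assert (Hall : forall z', ch M' tau p' z' -> In z' (map snd g1)).
      { intros z' Hz'. apply NNPP. intros Hn. apply Hno. eauto. }
      destruct (cnt tau i) as [n|] eqn:Ecnt.
      - destruct (gm_cnt M hM _ tau i n p Htau Hi Ecnt Hthp) as [[C [HC1 HC2]] _].
        destruct (gm_cnt M' hM' _ tau i n p' Htau Hi Ecnt Hthp') as [_ [Hn0|Hn1]].
        + subst n. destruct C; [|discriminate]. apply (HC2 x Hchx).
        + apply Hn1. apply (Cover_pad M' _ (n - 1)); auto.
          exists (map (img g1) (remove edec x C)). split.
          * rewrite length_map. pose proof (remove_length_lt edec C x (HC2 x Hchx)). lia.
          * intros z' Hz'. destruct (Hpre z' Hz' (Hall z' Hz')) as [z [Hzz [Hchz Hzx]]].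
            apply in_map_iff. exists z. split.
            -- apply (G3 _ _ _ _ (img_spec g1 z ltac:(eauto)) Hzz). auto.
            -- apply in_in_remove; auto.
      - apply (gm_inf M' hM' _ tau i (length g1) p' Htau Hi Ecnt Hthp').
        exists (map snd g1). rewrite length_map. split; auto. }
    destruct Hnew as [x' [[Hx'e [Hx'p Hx't]] Hx'n]].
    exists ((x, x') :: g1), x'. split; [|split; [intros z Hz; right; auto|left; auto]].
    split; [|split; [|split]].
    + right; auto.
    + intros a a' [E|H].
      * injection E as E1 E2; subst a a'. right. rewrite Hx'p. exact Hp.
      * right; auto.
    + intros a a' b b' [Ea|Ha] [Eb|Hb].
      * injection Ea as E1 E2; injection Eb as E3 E4; subst. tauto.
      * injection Ea as E1 E2; subst a a'. split; intros E; exfalso.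
        -- apply Hnot; exists b'; rewrite E; exact Hb.
        -- apply Hx'n; apply in_map_iff; exists (b, b'); simpl; split; [symmetry; exact E|exact Hb].
      * injection Eb as E1 E2; subst b b'. split; intros E; exfalso.
        -- apply Hnot; exists a'; rewrite <- E; exact Ha.
        -- apply Hx'n; apply in_map_iff; exists (a, a'); simpl; split; [exact E|exact Ha].
      * auto.
    + intros a a' l' [E|Ha] Hd' s Hs.
      * injection E as E1 E2; subst a a'. rewrite (depth_unique M x l' (S l) Hd' Hx) in Hs.
        rewrite ET2 in Hs. split; intros Hsat.
        -- rewrite (gm_dis M hM _ s tau x Hs Htau Hsat Htx). auto.
        -- rewrite (gm_dis M' hM' _ s tau x' Hs Htau Hsat Hx't). auto.
      * apply (G4 a a' l'); auto.
Qed.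

Lemma forth f x : Good M M' f -> exists g x', Good M M' g /\ incl f g /\ In (x, x') g.
Proof.
  intros HG. destruct (depth_ex M hM x) as [l [_ Hl]]. apply (forth_l l); auto.
Qed.

End EF.

Lemma back M M' (hM : GoodModel M) (hM' : GoodModel M') f x' : Good M M' f ->
  exists g x, Good M M' g /\ incl f g /\ In (x, x') g.
Proof.
  intros HG. destruct (forth M' M hM' hM (map swp f) x' (Good_swap _ _ _ HG)) as [g [x [HG2 [Hinc Hin]]]].
  exists (map swp g), x. split; [|split].
  - rewrite <- (swp_swp f) in HG. apply Good_swap in HG2. auto.
  - intros [a a'] H. apply in_swp. apply Hinc. apply in_swp. auto.
  - apply in_swp. auto.
Qed.

Theorem EF M M' (hM : GoodModel M) (hM' : GoodModel M') p :
  forall f e e', Good M M' f -> (forall n, In (e n, e' n) f) -> (sat M e p <-> sat M' e' p).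
Proof.
  induction p; intros f e e' HG He; simpl.
  - pose proof (term_rel M M' hM hM' f e e' HG He t). pose proof (term_rel M M' hM hM' f e e' HG He t0).
    destruct HG as [_ [_ [G3 _]]]. apply G3; auto.
  - apply (le_rel M M' hM hM' f); auto; apply term_rel; auto.
  - tauto.
  - rewrite (IHp f e e' HG He). tauto.
  - rewrite (IHp1 f e e' HG He), (IHp2 f e e' HG He). tauto.
  - rewrite (IHp1 f e e' HG He), (IHp2 f e e' HG He). tauto.
  - rewrite (IHp1 f e e' HG He), (IHp2 f e e' HG He). tauto.
  - split.
    + intros [x Hx]. destruct (forth M M' hM hM' f x HG) as [g [x' [HG2 [Hinc Hin]]]].
      exists x'. rewrite <- (IHp g (scons x e) (scons x' e') HG2); auto.
      intros [|n]; simpl; auto.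
    + intros [x' Hx']. destruct (back M M' hM hM' f x' HG) as [g [x [HG2 [Hinc Hin]]]].
      exists x. rewrite (IHp g (scons x e) (scons x' e') HG2); auto.
      intros [|n]; simpl; auto.
  - split.
    + intros H x'. destruct (back M M' hM hM' f x' HG) as [g [x [HG2 [Hinc Hin]]]].
      rewrite <- (IHp g (scons x e) (scons x' e') HG2); auto.
      intros [|n]; simpl; auto.
    + intros H x. destruct (forth M M' hM hM' f x HG) as [g [x' [HG2 [Hinc Hin]]]].
      rewrite (IHp g (scons x e) (scons x' e') HG2); auto.
      intros [|n]; simpl; auto.
Qed.

Lemma sat_AtMost_tt A k : sat A (e0 A) (AtMost k tt) <-> Cover A (fun _ => True) k.
Proof.
  rewrite sat_AtMost. unfold Cover. split; intros [l [Hl H]]; exists l; split; auto.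
  intros z _. apply H. simpl. auto.
Qed.

Section UPsec.
Variables (I : Type) (U : (I -> Prop) -> Prop) (F : I -> Lstr).
Hypothesis hU : ultrafilter U.
Hypothesis hF : forall i, K (F i).
Hypothesis hinf : infinite_str (ultraproduct U F).

Lemma up_large k : U (fun i => ~ Cover (F i) (fun _ => True) k).
Proof.
  apply NNPP. intros H. apply (proj2 (U_not I U F hU (fun i => ~ Cover (F i) (fun _ => True) k))) in H.
  apply hinf.
  assert (H2 : U (fun i => sat (F i) (fun n => Beps (F i)) (AtMost k tt))).
  { apply (U_mono I U hU _ _ H). intros i Hi. apply NNPP in Hi.
    apply (sat_AtMost_tt (F i) k). auto. }
  apply (los I U F hU (AtMost k tt) (fun _ i => Beps (F i))) in H2.
  apply (sat_AtMost_tt (ultraproduct U F) k) in H2. destruct H2 as [l [_ Hl]].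
  exists l. intros x; apply Hl; auto.
Qed.

Lemma up_good : GoodModel (ultraproduct U F).
Proof.
  intros s Hs. destruct (Ax_large s Hs) as [Ms HMs].
  apply (los I U F hU s (fun _ i => Beps (F i))).
  apply (U_mono I U hU _ _ (up_large Ms)). intros i Hi.
  destruct (hK (F i) (hF i)) as [HFi _].
  destruct (card_exists (F i) (fun _ => True) HFi) as [nA HnA].
  apply (HMs (F i) nA); auto.
  destruct (le_lt_dec nA Ms) as [Hle|Hlt]; [|lia].
  exfalso. apply Hi. apply (card_Cover _ _ _ _ HnA). auto.
Qed.

End UPsec.

Definition Rt (s : formula) : formula := FAll (FImp (FEq (TVar 0) TEps) s).

Lemma sat_Rt M s : sat M (e0 M) (Rt s) <-> sat1 M s (Beps M).
Proof.
  unfold Rt, sat1. simpl. split.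
  - intros H. apply H. auto.
  - intros H y E. rewrite E. exact H.
Qed.

Lemma Rt_sentence s : fbound 1 s -> sentence (Rt s).
Proof. intros H. unfold sentence, Rt. simpl. repeat split; auto. Qed.

Lemma depth_eps M l : depth M (Beps M) l -> l = 0.
Proof. intros D. apply (depth_unique M (Beps M) l 0); auto. split; simpl; auto. intros; lia. Qed.

Lemma root_good M M' s : GoodModel M -> GoodModel M' -> In s (Typ 0) ->
  sat1 M s (Beps M) -> sat1 M' s (Beps M') -> Good M M' [(Beps M, Beps M')].
Proof.
  intros hM hM' Hs H1 H2. split; [left; auto|split; [|split]].
  - intros a a' [E|[]]. injection E as E1 E2; subst. rewrite (gm5 M hM), (gm5 M' hM'). left; auto.
  - intros a a' b b' [E|[]] [E'|[]]. injection E as E1 E2; injection E' as E3 E4; subst. tauto.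
  - intros a a' l [E|[]] D s' Hs'. injection E as E1 E2; subst.
    apply depth_eps in D. subst l. split; intros H.
    + rewrite (gm_dis M hM _ s' s (Beps M) Hs' Hs H H1). auto.
    + rewrite (gm_dis M' hM' _ s' s (Beps M') Hs' Hs H H2). auto.
Qed.

Definition ThC (s0 : formula) : formula -> Prop :=
  fun s => sentence s /\ forall M', GoodModel M' -> sat1 M' s0 (Beps M') -> sat M' (e0 M') s.

Lemma part1 (I : Type) (U : (I -> Prop) -> Prop) (F : I -> Lstr) :
  ultrafilter U -> (forall i, K (F i)) -> infinite_str (ultraproduct U F) ->
  exists2 T, In T (map ThC (Typ 0)) & forall s, T s <-> Th (ultraproduct U F) s.
Proof.
  intros hU hF hinf. set (UP := ultraproduct U F).
  assert (hG : GoodModel UP) by (apply up_good; auto).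
  destruct (gm_cov UP hG (S Hd) (Beps UP)) as [s0 [Hs0 Hr]].
  exists (ThC s0); [apply in_map; unfold Typ; rewrite Nat.sub_0_r; auto|].
  intros s. unfold ThC, Th. split.
  - intros [Hs H]. split; auto.
  - intros [Hs H]. split; auto. intros M' hM' Hr'.
    assert (HGd : Good UP M' [(Beps UP, Beps M')]).
    { apply (root_good UP M' s0); auto. }
    apply (proj1 (EF UP M' hG hM' s [(Beps UP, Beps M')] (e0 UP) (e0 M') HGd ltac:(intros; left; auto))).
    exact H.
Qed.

Section BF.
Variables M1 M2 : Lstr.
Hypothesis h1 : GoodModel M1.
Hypothesis h2 : GoodModel M2.
Variable f1 : nat -> car M1.
Variable f2 : nat -> car M2.
Hypothesis f1s : forall x, exists n, f1 n = x.
Hypothesis f2s : forall x, exists n, f2 n = x.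
Variable g0 : list (car M1 * car M2).
Hypothesis hg0 : Good M1 M2 g0.

Lemma extf_ex (g : list (car M1 * car M2)) (x : car M1) : exists g',
  Good M1 M2 g -> Good M1 M2 g' /\ incl g g' /\ exists x', In (x, x') g'.
Proof.
  destruct (classic (Good M1 M2 g)) as [H|H].
  - destruct (forth M1 M2 h1 h2 g x H) as [g' [x' [H1 [H2 H3]]]]. exists g'. intros _. eauto.
  - exists g. tauto.
Qed.
Lemma extb_ex (g : list (car M1 * car M2)) (x' : car M2) : exists g',
  Good M1 M2 g -> Good M1 M2 g' /\ incl g g' /\ exists x, In (x, x') g'.
Proof.
  destruct (classic (Good M1 M2 g)) as [H|H].
  - destruct (back M1 M2 h1 h2 g x' H) as [g' [x [H1 [H2 H3]]]]. exists g'. intros _. eauto.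
  - exists g. tauto.
Qed.
Definition extf g x := proj1_sig (IndefiniteDescription.constructive_indefinite_description _ (extf_ex g x)).
Definition extb g x := proj1_sig (IndefiniteDescription.constructive_indefinite_description _ (extb_ex g x)).
Lemma extf_spec g x : Good M1 M2 g -> Good M1 M2 (extf g x) /\ incl g (extf g x) /\ exists x', In (x, x') (extf g x).
Proof. unfold extf. destruct (IndefiniteDescription.constructive_indefinite_description _ (extf_ex g x)). auto. Qed.
Lemma extb_spec g x : Good M1 M2 g -> Good M1 M2 (extb g x) /\ incl g (extb g x) /\ exists y, In (y, x) (extb g x).
Proof. unfold extb. destruct (IndefiniteDescription.constructive_indefinite_description _ (extb_ex g x)). auto. Qed.

Fixpoint chain (n : nat) : list (car M1 * car M2) :=
  match n with 0 => g0 | S n => extb (extf (chain n) (f1 n)) (f2 n) end.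

Lemma chain_good n : Good M1 M2 (chain n).
Proof. induction n; simpl; auto. apply extb_spec. apply extf_spec. auto. Qed.

Lemma chain_step n : incl (chain n) (chain (S n)).
Proof.
  simpl. intros z Hz. apply (extb_spec _ _ (proj1 (extf_spec _ _ (chain_good n)))).
  apply (extf_spec _ _ (chain_good n)). auto.
Qed.

Lemma chain_mono n m : n <= m -> incl (chain n) (chain m).
Proof.
  induction 1; [intros z; auto|]. intros z Hz. apply chain_step. auto.
Qed.

Lemma chain_dom n : exists x', In (f1 n, x') (chain (S n)).
Proof.
  destruct (extf_spec (chain n) (f1 n) (chain_good n)) as [G [_ [x' Hx']]].
  exists x'. simpl. apply (extb_spec _ _ G). auto.
Qed.
Lemma chain_rng n : exists x, In (x, f2 n) (chain (S n)).
Proof.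
  destruct (extf_spec (chain n) (f1 n) (chain_good n)) as [G _].
  destruct (extb_spec _ (f2 n) G) as [_ [_ [x Hx]]]. exists x. simpl. auto.
Qed.

Lemma h_ex x : exists x', exists n, In (x, x') (chain n).
Proof. destruct (f1s x) as [n E]. subst. destruct (chain_dom n) as [x' H]. eauto. Qed.

Definition hmap (x : car M1) : car M2 :=
  proj1_sig (IndefiniteDescription.constructive_indefinite_description _ (h_ex x)).
Lemma hmap_spec x : exists n, In (x, hmap x) (chain n).
Proof. unfold hmap. destruct (IndefiniteDescription.constructive_indefinite_description _ (h_ex x)). auto. Qed.

Lemma common n m a b : In a (chain n) -> In b (chain m) ->
  In a (chain (Nat.max n m)) /\ In b (chain (Nat.max n m)).
Proof. intros Ha Hb. split; [apply (chain_mono n)|apply (chain_mono m)]; auto; lia. Qed.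

Lemma hmap_iso : isomorphic M1 M2.
Proof.
  exists hmap. split; [|split; [|split; [|split; [|split]]]].
  - intros x y E. destruct (hmap_spec x) as [n Hn]. destruct (hmap_spec y) as [m Hm].
    destruct (common n m _ _ Hn Hm) as [A B].
    destruct (chain_good (Nat.max n m)) as [_ [_ [G3 _]]]. apply (G3 _ _ _ _ A B). auto.
  - intros z. destruct (f2s z) as [n E]. subst. destruct (chain_rng n) as [x Hx].
    exists x. destruct (hmap_spec x) as [m Hm]. destruct (common _ _ _ _ Hm Hx) as [A B].
    destruct (chain_good (Nat.max m (S n))) as [_ [_ [G3 _]]]. apply (G3 _ _ _ _ A B). auto.
  - intros x y. destruct (hmap_spec x) as [n Hn]. destruct (hmap_spec y) as [m Hm].
    destruct (common n m _ _ Hn Hm) as [A B].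
    apply (le_rel M1 M2 h1 h2 _ _ _ _ _ (chain_good _) A B).
  - destruct (hmap_spec (Beps M1)) as [n Hn].
    assert (H0 : In (Beps M1, Beps M2) (chain n)) by apply (chain_good n).
    destruct (chain_good n) as [_ [_ [G3 _]]]. apply (G3 _ _ _ _ Hn H0). auto.
  - intros x y. destruct (hmap_spec x) as [n Hn]. destruct (hmap_spec y) as [m Hm].
    destruct (common n m _ _ Hn Hm) as [A B].
    assert (C := meet_rel M1 M2 h1 h2 _ _ _ _ _ (chain_good _) A B).
    destruct (hmap_spec (Bmeet M1 x y)) as [k Hk].
    destruct (common _ _ _ _ Hk C) as [D E].
    destruct (chain_good (Nat.max k (Nat.max n m))) as [_ [_ [G3 _]]]. apply (G3 _ _ _ _ D E). auto.
  - intros x. destruct (hmap_spec x) as [n Hn].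
    assert (C : In (Bpred M1 x, Bpred M2 (hmap x)) (chain n)) by (apply (chain_good n); auto).
    destruct (hmap_spec (Bpred M1 x)) as [k Hk].
    destruct (common _ _ _ _ Hk C) as [D E].
    destruct (chain_good (Nat.max k n)) as [_ [_ [G3 _]]]. apply (G3 _ _ _ _ D E). auto.
Qed.

End BF.

Lemma part2 (I : Type) (U : (I -> Prop) -> Prop) (F : I -> Lstr) :
  ultrafilter U -> (forall i, K (F i)) -> infinite_str (ultraproduct U F) ->
  aleph0_categorical (Th (ultraproduct U F)).
Proof.
  intros hU hF hinf. set (UP := ultraproduct U F).
  assert (hG : GoodModel UP) by (apply up_good; auto).
  destruct (gm_cov UP hG (S Hd) (Beps UP)) as [s0 [Hs0 Hr]].
  assert (Hs0fb : fbound 1 s0) by (apply (Top_fb (S Hd)); auto).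
  intros M1 M2 [f1 [_ f1s]] [f2 [_ f2s]] Hm1 Hm2.
  assert (G1 : GoodModel M1).
  { intros s Hs. apply Hm1. split; [apply Ax_sentence; auto|apply hG; auto]. }
  assert (G2 : GoodModel M2).
  { intros s Hs. apply Hm2. split; [apply Ax_sentence; auto|apply hG; auto]. }
  assert (R1 : sat1 M1 s0 (Beps M1)).
  { apply (proj1 (sat_Rt M1 s0)). apply Hm1. split; [apply Rt_sentence; auto|]. apply (proj2 (sat_Rt UP s0)). auto. }
  assert (R2 : sat1 M2 s0 (Beps M2)).
  { apply (proj1 (sat_Rt M2 s0)). apply Hm2. split; [apply Rt_sentence; auto|]. apply (proj2 (sat_Rt UP s0)). auto. }
  apply (hmap_iso M1 M2 G1 G2 f1 f2 f1s f2s [(Beps M1, Beps M2)]).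
  apply (root_good M1 M2 s0); auto.
Qed.

End Main.

Open Scope R_scope.

Theorem mainTheorem15 (N : nat) (K : Lstr -> Prop) :
  (0 < N)%nat ->
  (forall A, K A -> finite_str A /\ is_tree A) ->
  (forall n : nat, exists A nA, K A /\ card_is A (fun _ => True) nA /\ (n <= nA)%nat) ->
  asymptotic_class N K ->
  (* (1) the set of theories of infinite ultraproducts of members of K is finite *)
  (exists L : list (formula -> Prop),
     forall (I : Type) (U : (I -> Prop) -> Prop) (F : I -> Lstr),
       ultrafilter U -> (forall i, K (F i)) -> infinite_str (ultraproduct U F) ->
       exists2 T, In T L & forall s, T s <-> Th (ultraproduct U F) s) /\
  (* (2) each of them is aleph_0-categorical *)
  (forall (I : Type) (U : (I -> Prop) -> Prop) (F : I -> Lstr),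
     ultrafilter U -> (forall i, K (F i)) -> infinite_str (ultraproduct U F) ->
     aleph0_categorical (Th (ultraproduct U F))).
Proof.
  intros hN hK _ hAC. split.
  - exists (map (ThC N K hN hK hAC) (Typ N K hN hK hAC 0)). intros I U F hU hF hinf.
    apply (part1 N K hN hK hAC I U F hU hF hinf).
  - intros I U F hU hF hinf. apply (part2 N K hN hK hAC I U F hU hF hinf).
Qed.
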